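(* Let $L<U$ be reals and $n\ge1$. For the variance function $f:[L,U]^n\to\mathbb{R}$, $f(x_1,\dots,x_n)=\frac1n\sum_{i=1}^n(x_i-\bar x)^2$ with $\bar x=\frac1n\sum_{i=1}^n x_i$, and any $\beta>0$, the $\beta$-smooth sensitivity $S^*_{f,\beta}(V)$ of $f$ at a given dataset $V=(x_1,\dots,x_n)\in[L,U]^n$ can be computed in $\mathcal{O}(n^2)$ time.
   Context: A dataset is a list $V=(x_1,\dots,x_n)$ of $n$ real numbers in $[L,U]$. For datasets $x,y\in[L,U]^n$, $d(x,y)$ is the number of positions in which they differ; $x,y$ are neighbors if $d(x,y)=1$. The local sensitivity of $f$ at $x$ is $LS_f(x)=\max_{y:\,d(x,y)=1}|f(x)-f(y)|$. For $\beta>0$, the $\beta$-smooth sensitivity of $f$ at $x$ is $S^*_{f,\beta}(x)=\max_{y\in[L,U]^n} LS_f(y)\,e^{-\beta d(x,y)}$. *)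

(* Defs.v *)
From Stdlib Require Import Reals Arith Lia List.
Open Scope R_scope.

(* A dataset of size n is x : nat -> R, with entries x 0, ..., x (n-1);
   values at positions >= n are irrelevant. *)

Fixpoint sumR (n : nat) (g : nat -> R) : R :=
  match n with O => 0 | S m => sumR m g + g m end.

Definition mean (n : nat) (x : nat -> R) : R := sumR n x / INR n.

Definition variance (n : nat) (x : nat -> R) : R :=
  sumR n (fun i => (x i - mean n x) ^ 2) / INR n.

Definition inbox (n : nat) (L U : R) (x : nat -> R) : Prop :=
  forall i, (i < n)%nat -> L <= x i <= U.

Fixpoint dist (n : nat) (x y : nat -> R) : nat :=
  match n with
  | O => O
  | S m => (dist m x y + (if Req_EM_T (x m) (y m) then 0 else 1))%nat
  end.

(* { |f(y) - f(z)| : z in [L,U]^n, d(y,z) = 1 } ; LS_f(y) is its sup (= max) *)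
Definition LSset (n : nat) (L U : R) (y : nat -> R) : R -> Prop :=
  fun v => exists z, inbox n L U z /\ dist n y z = 1%nat /\
                     v = Rabs (variance n y - variance n z).

(* { LS_f(y) e^{-beta d(x,y)} : y in [L,U]^n } ; S*_{f,beta}(x) is its sup (= max) *)
Definition SSset (n : nat) (L U beta : R) (x : nat -> R) : R -> Prop :=
  fun v => exists y, inbox n L U y /\
           exists l, is_lub (LSset n L U y) l /\
                     v = l * exp (- beta * INR (dist n x y)).

(* Real registers Rm : nat -> R, natural-number registers Nm : nat -> nat.
   Real constants are only obtainable by casting naturals (no arbitrary real
   constants, no floor from reals to naturals). *)
Inductive instr : Type :=
  | RCopy  (d s : nat)
  | RAdd   (d a b : nat)
  | RSub   (d a b : nat)
  | RMul   (d a b : nat)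
  | RDiv   (d a b : nat)          (* R[d] := R[a] / R[b]  (0 if R[b] = 0) *)
  | RExp   (d a : nat)
  | RSqrt  (d a : nat)
  | RofN   (d i : nat)
  | RLoadI (d i : nat)
  | RStoreI (i s : nat)
  | NConst (d k : nat)
  | NAdd   (d a b : nat)
  | NSub   (d a b : nat)          (* N[d] := N[a] - N[b] (truncated) *)
  | NMul   (d a b : nat)
  | JRLt   (a b l : nat)
  | JNZ    (i l : nat)            (* if N[i] = 0 then goto l *)
  | Jmp    (l : nat)
  | Halt.

Record state : Type := mkState { pc : nat; Nm : nat -> nat; Rm : nat -> R }.

Definition updN (f : nat -> nat) (k v : nat) : nat -> nat :=
  fun j => if Nat.eqb j k then v else f j.
Definition updR (f : nat -> R) (k : nat) (v : R) : nat -> R :=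
  fun j => if Nat.eqb j k then v else f j.

Definition next (s : state) (N : nat -> nat) (Rr : nat -> R) : state :=
  mkState (S (pc s)) N Rr.

Definition step (p : list instr) (s : state) : option state :=
  let N := Nm s in let Rr := Rm s in
  match nth_error p (pc s) with
  | None => None
  | Some Halt => None
  | Some (RCopy d a) => Some (next s N (updR Rr d (Rr a)))
  | Some (RAdd d a b) => Some (next s N (updR Rr d (Rr a + Rr b)))
  | Some (RSub d a b) => Some (next s N (updR Rr d (Rr a - Rr b)))
  | Some (RMul d a b) => Some (next s N (updR Rr d (Rr a * Rr b)))
  | Some (RDiv d a b) =>
      Some (next s N (updR Rr d (if Req_EM_T (Rr b) 0 then 0 else Rr a / Rr b)))
  | Some (RExp d a) => Some (next s N (updR Rr d (exp (Rr a))))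
  | Some (RSqrt d a) => Some (next s N (updR Rr d (sqrt (Rr a))))
  | Some (RofN d i) => Some (next s N (updR Rr d (INR (N i))))
  | Some (RLoadI d i) => Some (next s N (updR Rr d (Rr (N i))))
  | Some (RStoreI i a) => Some (next s N (updR Rr (N i) (Rr a)))
  | Some (NConst d k) => Some (next s (updN N d k) Rr)
  | Some (NAdd d a b) => Some (next s (updN N d (N a + N b)%nat) Rr)
  | Some (NSub d a b) => Some (next s (updN N d (N a - N b)%nat) Rr)
  | Some (NMul d a b) => Some (next s (updN N d (N a * N b)%nat) Rr)
  | Some (JRLt a b l) =>
      if Rlt_dec (Rr a) (Rr b) then Some (mkState l N Rr) else Some (next s N Rr)
  | Some (JNZ i l) =>
      if Nat.eqb (N i) 0 then Some (mkState l N Rr) else Some (next s N Rr)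
  | Some (Jmp l) => Some (mkState l N Rr)
  end.

Fixpoint run (p : list instr) (t : nat) (s : state) : state :=
  match t with
  | O => s
  | S t' => match step p s with None => s | Some s' => run p t' s' end
  end.

Definition halted (p : list instr) (s : state) : Prop := step p s = None.

(* Input encoding: N[0] = n; R[0] = L, R[1] = U, R[2] = beta,
   R[3+i] = x_i for i < n; all other registers 0.  Output: R[0] at halt. *)
Definition init (n : nat) (L U beta : R) (x : nat -> R) : state :=
  mkState 0 (fun k => if Nat.eqb k 0 then n else 0%nat)
    (fun k => match k with
              | 0%nat => L | 1%nat => U | 2%nat => beta
              | S (S (S i)) => if Nat.ltb i n then x i else 0
              end).

(* Main.v *)
Require Import Defs.
From Stdlib Require Import Reals Lra Lia Arith List Classical FunctionalExtensionality.
Import ListNotations.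
Open Scope R_scope.

Definition cond (a b c e : R) : R := if Rlt_dec a b then c else e.
Definition mx (a b : R) : R := cond a b b a.
Definition mn (a b : R) : R := cond b a b a.
Definition ab (t : R) : R := mx t (0 - t).
Definition dv (a b : R) : R := if Req_EM_T b 0 then 0 else a / b.
Definition sq (t : R) : R := t * t.

Lemma mx_Rmax a b : mx a b = Rmax a b.
Proof. unfold mx, cond, Rmax. destruct (Rlt_dec a b); destruct (Rle_dec a b); lra. Qed.
Lemma mn_Rmin a b : mn a b = Rmin a b.
Proof. unfold mn, cond, Rmin. destruct (Rlt_dec b a); destruct (Rle_dec a b); lra. Qed.
Lemma ab_abs t : ab t = Rabs t.
Proof. unfold ab. rewrite mx_Rmax. unfold Rmax, Rabs.
  destruct (Rle_dec t (0 - t)); destruct (Rcase_abs t); lra. Qed.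
Lemma mx_cases a b : mx a b = a \/ mx a b = b.
Proof. unfold mx, cond. destruct (Rlt_dec a b); auto. Qed.
Lemma dv_eq a b : b <> 0 -> dv a b = a / b.
Proof. intros. unfold dv. destruct (Req_EM_T b 0); [contradiction|auto]. Qed.

Lemma sumR_ext n g h : (forall i, (i < n)%nat -> g i = h i) -> sumR n g = sumR n h.
Proof. induction n; simpl; intros; auto. rewrite IHn by (intros; apply H; lia). rewrite H by lia. auto. Qed.
Lemma sumR_plus n g h : sumR n (fun i => g i + h i) = sumR n g + sumR n h.
Proof. induction n; simpl; [lra|]. rewrite IHn. lra. Qed.
Lemma sumR_minus n g h : sumR n (fun i => g i - h i) = sumR n g - sumR n h.
Proof. induction n; simpl; [lra|]. rewrite IHn. lra. Qed.
Lemma sumR_scal n c g : sumR n (fun i => c * g i) = c * sumR n g.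
Proof. induction n; simpl; [lra|]. rewrite IHn. lra. Qed.
Lemma sumR_const n c : sumR n (fun _ => c) = INR n * c.
Proof. induction n; simpl sumR; [simpl; lra|]. rewrite IHn, S_INR. lra. Qed.
Lemma sumR_le n g h : (forall i, (i < n)%nat -> g i <= h i) -> sumR n g <= sumR n h.
Proof. induction n; simpl; intros; [lra|]. specialize (IHn ltac:(intros; apply H; lia)). specialize (H n ltac:(lia)). lra. Qed.
Lemma sumR_upd n g h j : (j < n)%nat -> (forall i, (i < n)%nat -> i <> j -> g i = h i) ->
  sumR n h = sumR n g - g j + h j.
Proof.
  induction n; intros Hj H; [lia|]. simpl.
  destruct (Nat.eq_dec j n).
  - subst. rewrite (sumR_ext n h g) by (intros; symmetry; apply H; lia). lra.
  - rewrite IHn by (try lia; intros; apply H; lia). rewrite (H n) by lia. lra.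
Qed.

Definition sumD (n : nat) (D : nat -> bool) (v : nat -> R) : R :=
  sumR n (fun i => if D i then v i else 0).
Fixpoint cntN (n : nat) (D : nat -> bool) : nat :=
  match n with O => O | S m => (cntN m D + (if D m then 1 else 0))%nat end.
Definition updB (D : nat -> bool) (m : nat) (b : bool) : nat -> bool :=
  fun i => if Nat.eqb i m then b else D i.

Lemma cntN_ext n D E : (forall i, (i < n)%nat -> D i = E i) -> cntN n D = cntN n E.
Proof. induction n; simpl; intros; auto. rewrite IHn by (intros; apply H; lia). rewrite H by lia. auto. Qed.
Lemma sumD_ext n D E v : (forall i, (i < n)%nat -> D i = E i) -> sumD n D v = sumD n E v.
Proof. intros. unfold sumD. apply sumR_ext. intros. rewrite H by auto. auto. Qed.
Lemma cntN_le n D : (cntN n D <= n)%nat.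
Proof. induction n; simpl; auto. destruct (D n); lia. Qed.
Lemma cntN_le_j n D j : (j < n)%nat -> D j = false -> (cntN n D <= n - 1)%nat.
Proof.
  induction n; intros; [lia|]. simpl. destruct (Nat.eq_dec j n).
  - subst. rewrite H0. pose proof (cntN_le n D). lia.
  - specialize (IHn ltac:(lia) H0). destruct (D n); lia.
Qed.
Lemma cntN_upd n D m b : (m < n)%nat ->
  (cntN n (updB D m b) + (if D m then 1 else 0) = cntN n D + (if b then 1 else 0))%nat.
Proof.
  induction n; intros; [lia|]. simpl. unfold updB at 2.
  destruct (Nat.eq_dec m n).
  - subst. rewrite Nat.eqb_refl.
    rewrite (cntN_ext n (updB D n b) D). 2:{ intros. unfold updB. destruct (Nat.eqb_spec i n); [lia|auto]. }
    destruct b, (D n); lia.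
  - destruct (Nat.eqb_spec n m); [lia|]. specialize (IHn ltac:(lia)). destruct (D n), (D m), b; lia.
Qed.
Lemma sumD_upd n D m b v : (m < n)%nat ->
  sumD n (updB D m b) v + (if D m then v m else 0) = sumD n D v + (if b then v m else 0).
Proof.
  intros. unfold sumD. rewrite (sumR_upd n (fun i => if D i then v i else 0) (fun i => if updB D m b i then v i else 0) m H).
  - unfold updB. rewrite Nat.eqb_refl. lra.
  - intros. unfold updB. destruct (Nat.eqb_spec i m); [lia|auto].
Qed.
Lemma sumD_neg n D v : sumD n D (fun i => 0 - v i) = - sumD n D v.
Proof. unfold sumD. induction n; simpl; [lra|]. rewrite IHn. destruct (D n); lra. Qed.
Lemma sumD_bounds n D y a b : (forall i, (i < n)%nat -> D i = true -> a <= y i <= b) ->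
  INR (cntN n D) * a <= sumD n D y <= INR (cntN n D) * b.
Proof.
  unfold sumD. induction n; intros; simpl; [lra|].
  specialize (IHn ltac:(intros; apply H; auto; lia)).
  rewrite plus_INR. destruct (D n) eqn:E; simpl; [specialize (H n ltac:(lia) E)|]; lra.
Qed.
Lemma pigeon n F E : (cntN n E < cntN n F)%nat -> exists d, (d < n)%nat /\ F d = true /\ E d = false.
Proof.
  induction n; simpl; intros; [lia|].
  destruct (F n) eqn:Fn, (E n) eqn:En.
  - destruct IHn as [d ?]; [lia|]. exists d; intuition lia.
  - exists n; auto.
  - destruct IHn as [d ?]; [lia|]. exists d; intuition lia.
  - destruct IHn as [d ?]; [lia|]. exists d; intuition lia.
Qed.

Fixpoint bestf (v : nat -> R) (i : nat) : nat -> R :=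
  match i with
  | O => fun _ => 0
  | S i' => fun k => if Nat.eqb k 0 then bestf v i' 0
                     else if Nat.eqb k (S i') then bestf v i' i' + v i'
                     else mx (bestf v i' k) (bestf v i' (k - 1) + v i')
  end.

Lemma bestf_up v i : forall D, sumD i D v <= bestf v i (cntN i D).
Proof.
  induction i; intros D; simpl. { unfold sumD; simpl; lra. }
  unfold sumD in *; simpl. pose proof (IHi D) as IH. pose proof (cntN_le i D).
  destruct (D i).
  - replace (cntN i D + 1)%nat with (S (cntN i D)) by lia. simpl.
    destruct (Nat.eqb_spec (cntN i D) i).
    + rewrite e in *. lra.
    + rewrite ?Nat.sub_0_r. rewrite mx_Rmax.
      eapply Rle_trans; [|apply Rmax_r]. lra.
  - rewrite Nat.add_0_r. destruct (Nat.eqb_spec (cntN i D) 0).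
    + rewrite e in *. lra.
    + destruct (Nat.eqb_spec (cntN i D) (S i)); [lia|]. rewrite mx_Rmax.
      eapply Rle_trans; [|apply Rmax_l]. lra.
Qed.

Lemma updB_top D i b v : cntN (S i) (updB D i b) = (cntN i D + if b then 1 else 0)%nat /\
  sumD (S i) (updB D i b) v = sumD i D v + if b then v i else 0.
Proof.
  assert (E: forall j, (j < i)%nat -> updB D i b j = D j).
  { intros. unfold updB. destruct (Nat.eqb_spec j i); [lia|auto]. }
  split.
  - simpl. rewrite (cntN_ext i _ D E).
    replace (updB D i b i) with b by (unfold updB; rewrite Nat.eqb_refl; auto). auto.
  - unfold sumD. simpl. fold (sumD i (updB D i b) v). fold (sumD i D v).
    rewrite (sumD_ext i _ D v E).
    replace (updB D i b i) with b by (unfold updB; rewrite Nat.eqb_refl; auto). auto.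
Qed.

Lemma bestf_ach v i : forall k, (k <= i)%nat -> exists D, cntN i D = k /\ sumD i D v = bestf v i k.
Proof.
  induction i; intros k Hk.
  - exists (fun _ => false). simpl. split; [lia|]. unfold sumD; simpl; auto.
  - cbn [bestf]. destruct (Nat.eqb_spec k 0).
    + subst. destruct (IHi 0%nat ltac:(lia)) as [D [H1 H2]].
      exists (updB D i false). destruct (updB_top D i false v). split; lia || lra.
    + destruct (Nat.eqb_spec k (S i)).
      * subst. destruct (IHi i ltac:(lia)) as [D [H1 H2]].
        exists (updB D i true). destruct (updB_top D i true v). split; lia || lra.
      * destruct (mx_cases (bestf v i k) (bestf v i (k - 1) + v i)) as [M|M]; rewrite M.
        -- destruct (IHi k ltac:(lia)) as [D [H1 H2]].
           exists (updB D i false). destruct (updB_top D i false v). split; lia || lra.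
        -- destruct (IHi (k-1)%nat ltac:(lia)) as [D [H1 H2]].
           exists (updB D i true). destruct (updB_top D i true v). split; lia || lra.
Qed.

Lemma bestf_full v i : bestf v i i = sumR i v.
Proof. induction i; [reflexivity|]. cbn [bestf Nat.eqb]. rewrite Nat.eqb_refl, IHi. reflexivity. Qed.

(* top-k among others *)
Definition topk v n j k := mn (bestf v n k) (bestf v n (k + 1) - v j).

Lemma topk_up v n j k D : (j < n)%nat -> D j = false -> cntN n D = k -> sumD n D v <= topk v n j k.
Proof.
  intros Hj Dj Hc. unfold topk. rewrite mn_Rmin. apply Rmin_glb.
  - rewrite <- Hc. apply bestf_up.
  - pose proof (cntN_upd n D j true Hj). pose proof (sumD_upd n D j true v Hj).
    rewrite Dj in *. pose proof (bestf_up v n (updB D j true)).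
    replace (cntN n (updB D j true)) with (k + 1)%nat in * by lia. lra.
Qed.

Lemma topk_ach v n j k : (j < n)%nat -> (k < n)%nat ->
  exists D, D j = false /\ cntN n D = k /\ sumD n D v = topk v n j k.
Proof.
  intros Hj Hk.
  enough (suff: exists D, D j = false /\ cntN n D = k /\ topk v n j k <= sumD n D v).
  { destruct suff as [D [? [? ?]]]. exists D. repeat split; auto.
    pose proof (topk_up v n j k D Hj H H0). lra. }
  destruct (bestf_ach v n k ltac:(lia)) as [E [E1 E2]].
  destruct (bestf_ach v n (k+1) ltac:(lia)) as [F [F1 F2]].
  unfold topk. rewrite mn_Rmin.
  destruct (F j) eqn:Fj.
  - exists (updB F j false). pose proof (cntN_upd n F j false Hj). pose proof (sumD_upd n F j false v Hj).
    rewrite Fj in *. split; [unfold updB; rewrite Nat.eqb_refl; auto|]. split; [lia|].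
    eapply Rle_trans; [apply Rmin_r|]. lra.
  - destruct (E j) eqn:Ej.
    + destruct (pigeon n F E ltac:(lia)) as [d [Hd [Fd Ed]]].
      assert (dj : d <> j) by (intro; subst; congruence).
      set (D := updB (updB E j false) d true).
      exists D. pose proof (cntN_upd n E j false Hj). pose proof (sumD_upd n E j false v Hj).
      pose proof (cntN_upd n (updB E j false) d true Hd). pose proof (sumD_upd n (updB E j false) d true v Hd).
      assert (Ed': updB E j false d = false) by (unfold updB; destruct (Nat.eqb_spec d j); auto; lia).
      rewrite Ej, Ed' in *.
      pose proof (cntN_upd n F d false Hd). pose proof (sumD_upd n F d false v Hd). rewrite Fd in *.
      pose proof (bestf_up v n (updB F d false)).
      replace (cntN n (updB F d false)) with k in * by lia.
      split. { unfold D, updB. destruct (Nat.eqb_spec j d); [lia|]. rewrite Nat.eqb_refl. auto. }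
      split; [unfold D; lia|].
      eapply Rle_trans; [apply Rmin_r|]. unfold D. lra.
    + exists E. split; auto. split; auto. eapply Rle_trans; [apply Rmin_l|]. lra.
Qed.

Definition negx (x : nat -> R) : nat -> R := fun i => 0 - x i.
Definition botk x n j k := mx (0 - bestf (negx x) n k) (0 - bestf (negx x) n (k + 1) - x j).

Lemma sumD_negx n D x : sumD n D (negx x) = - sumD n D x.
Proof. unfold negx. apply sumD_neg. Qed.

Lemma botk_eq x n j k : botk x n j k = - topk (negx x) n j k.
Proof. unfold botk, topk. rewrite mx_Rmax, mn_Rmin. unfold negx.
  unfold Rmax, Rmin. destruct (Rle_dec _ _); destruct (Rle_dec _ _); lra. Qed.

Lemma botk_up x n j k D : (j < n)%nat -> D j = false -> cntN n D = k -> botk x n j k <= sumD n D x.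
Proof. intros. rewrite botk_eq. pose proof (topk_up (negx x) n j k D H H0 H1).
  rewrite sumD_negx in H2. lra. Qed.
Lemma botk_ach x n j k : (j < n)%nat -> (k < n)%nat ->
  exists D, D j = false /\ cntN n D = k /\ sumD n D x = botk x n j k.
Proof. intros. destruct (topk_ach (negx x) n j k H H0) as [D [? [? ?]]]. exists D. repeat split; auto.
  rewrite botk_eq. rewrite sumD_negx in H3. lra. Qed.

Lemma var_alt n y : INR n <> 0 ->
  variance n y = (sumR n (fun i => y i * y i) - sumR n y * sumR n y / INR n) / INR n.
Proof.
  intros Hn. unfold variance, mean. set (m := sumR n y / INR n).
  rewrite (sumR_ext n _ (fun i => y i * y i + ((-2*m) * y i + m*m))) by (intros; simpl; ring).
  rewrite sumR_plus, sumR_plus, sumR_scal, sumR_const. unfold m. field. auto.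
Qed.

Lemma var1 y : variance 1 y = 0.
Proof. unfold variance, mean. simpl. field. Qed.

Lemma var_diff n y z j : (2 <= n)%nat -> (j < n)%nat -> (forall i, (i < n)%nat -> i <> j -> y i = z i) ->
  variance n y - variance n z =
  (INR n - 1) / (INR n * INR n) * (sq (y j - (sumR n y - y j) / (INR n - 1)) - sq (z j - (sumR n y - y j) / (INR n - 1))).
Proof.
  intros Hn Hj H.
  assert (H2 : 2 <= INR n) by (replace 2 with (INR 2) by (simpl; lra); apply le_INR; auto).
  rewrite (var_alt n y), (var_alt n z) by lra.
  rewrite (sumR_upd n y z j Hj H).
  rewrite (sumR_upd n (fun i => y i * y i) (fun i => z i * z i) j Hj) by (intros; rewrite H; auto).
  unfold sq. field. lra.
Qed.

Lemma dist_INR n x y : INR (Defs.dist n x y) = sumR n (fun i => if Req_EM_T (x i) (y i) then 0 else 1).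
Proof. induction n; simpl Defs.dist; simpl sumR; auto. rewrite plus_INR, IHn. destruct (Req_EM_T (x n) (y n)); simpl; lra. Qed.

Lemma dist0 n x y : Defs.dist n x y = 0%nat -> forall i, (i < n)%nat -> x i = y i.
Proof. induction n; simpl; intros; [lia|]. destruct (Req_EM_T (x n) (y n)); [|lia].
  destruct (Nat.eq_dec i n); [subst; auto|]. apply IHn; lia. Qed.

Lemma dist1 n y z : Defs.dist n y z = 1%nat -> exists j, (j < n)%nat /\ y j <> z j /\
  forall i, (i < n)%nat -> i <> j -> y i = z i.
Proof.
  induction n; simpl; intros; [lia|]. destruct (Req_EM_T (y n) (z n)).
  - destruct IHn as [j [? [? ?]]]; [lia|]. exists j. repeat split; auto; try lia.
    intros. destruct (Nat.eq_dec i n); [subst; auto|]. apply H2; lia.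
  - exists n. repeat split; auto. intros. apply dist0 with n; [lia|lia].
Qed.

Lemma dist_upd n y j b : (j < n)%nat -> b <> y j -> Defs.dist n y (updR y j b) = 1%nat.
Proof.
  intros. apply INR_eq. rewrite dist_INR. simpl INR.
  rewrite (sumR_upd n (fun _ => 0) _ j H).
  - rewrite sumR_const. unfold updR. rewrite Nat.eqb_refl. destruct (Req_EM_T (y j) b); [congruence|]. lra.
  - intros. unfold updR. destruct (Nat.eqb_spec i j); [lia|]. destruct (Req_EM_T (y i) (y i)); [auto|congruence].
Qed.

Lemma updR_box n L U y j b : inbox n L U y -> L <= b <= U -> inbox n L U (updR y j b).
Proof. intros H Hb i Hi. unfold updR. destruct (Nat.eqb i j); auto. Qed.

Definition Kf a b e := ab (sq (a - e) - sq (b - e)).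
Definition Phi L U a e := mx (mx (Kf a L e) (Kf a U e)) (sq (a - e)).
Definition Psi L U e := mx (sq (L - e)) (sq (U - e)).
Definition topv n x j k := topk x n j k.
Definition lo n L x j k := dv (bestf x n n - x j - topk x n j k + INR k * L) (INR (n - 1)).
Definition hi n U x j k := dv (bestf x n n - x j - botk x n j k + INR k * U) (INR (n - 1)).
Definition Ek beta k := exp (0 - beta * INR k).
Definition cand n L U beta x j k :=
  mx (mx (Ek beta k * Phi L U (x j) (lo n L x j k)) (Ek beta k * Phi L U (x j) (hi n U x j k)))
     (mx (Ek beta (k + 1) * Psi L U (lo n L x j k)) (Ek beta (k + 1) * Psi L U (hi n U x j k))).
Fixpoint accK n L U beta x (a : R) (j k : nat) : R :=
  match k with O => a | S k' => mx (accK n L U beta x a j k') (cand n L U beta x j k') end.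
Fixpoint accJ n L U beta x (j : nat) : R :=
  match j with O => 0 | S j' => accK n L U beta x (accJ n L U beta x j') j' n end.
Definition cn n := dv (INR (n - 1)) (INR (n * n)).

Lemma Kf_abs a b e : Kf a b e = Rabs (sq (a - e) - sq (b - e)).
Proof. unfold Kf. apply ab_abs. Qed.

Ltac dmax := unfold Rmax in *; repeat (match goal with
  | H : context[Rle_dec ?a ?b] |- _ => destruct (Rle_dec a b)
  | |- context[Rle_dec ?a ?b] => destruct (Rle_dec a b) end).
Ltac dabs := unfold Rabs in *; repeat (match goal with
  | H : context[Rcase_abs ?a] |- _ => destruct (Rcase_abs a)
  | |- context[Rcase_abs ?a] => destruct (Rcase_abs a) end).

Lemma sq_nn t : 0 <= sq t.
Proof. apply Rle_0_sqr. Qed.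

Lemma sq_between p q t : (p <= t <= q) -> sq t <= Rmax (sq p) (sq q).
Proof. intros. unfold sq, Rmax. destruct (Rle_dec _ _); destruct (Rle_dec 0 t).
  - assert (t * t <= q * q) by nra. lra.
  - assert (t * t <= p * p) by nra. nra.
  - assert (t * t <= q * q) by nra. nra.
  - assert (t * t <= p * p) by nra. lra. Qed.

Lemma K_Phi L U a b e : L <= b <= U -> Kf a b e <= Phi L U a e.
Proof.
  intros Hb. unfold Phi. rewrite !mx_Rmax, !Kf_abs.
  pose proof (sq_between (L - e) (U - e) (b - e) ltac:(lra)).
  assert (0 <= sq (a - e)) by apply sq_nn. assert (0 <= sq (b - e)) by apply sq_nn.
  dmax; dabs; lra.
Qed.

Lemma K_Psi L U a b e : L <= a <= U -> L <= b <= U -> Kf a b e <= Psi L U e.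
Proof.
  intros Ha Hb. unfold Psi. rewrite !mx_Rmax, !Kf_abs.
  pose proof (sq_between (L - e) (U - e) (b - e) ltac:(lra)).
  pose proof (sq_between (L - e) (U - e) (a - e) ltac:(lra)).
  assert (0 <= sq (a - e)) by apply sq_nn. assert (0 <= sq (b - e)) by apply sq_nn.
  dmax; dabs; lra.
Qed.

Lemma Psi_nonneg L U e : 0 <= Psi L U e.
Proof. unfold Psi. rewrite mx_Rmax. eapply Rle_trans; [|apply Rmax_l]. apply sq_nn. Qed.

Lemma Psi_bound L U e : L <= e <= U -> Psi L U e <= sq (U - L).
Proof. intros. unfold Psi. rewrite mx_Rmax. apply Rmax_lub; unfold sq.
  - assert (0 <= e - L) by lra. assert (0 <= U - e) by lra. nra.
  - assert (0 <= e - L) by lra. assert (0 <= U - e) by lra. nra. Qed.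

Lemma lin_abs c d lo hi e : lo <= e <= hi -> Rabs (c * e + d) <= Rmax (Rabs (c * lo + d)) (Rabs (c * hi + d)).
Proof.
  intros. destruct (Rle_dec 0 c).
  - assert (c*lo <= c*e) by (apply Rmult_le_compat_l; lra).
    assert (c*e <= c*hi) by (apply Rmult_le_compat_l; lra). dmax; dabs; lra.
  - assert (c*e <= c*lo) by nra. assert (c*hi <= c*e) by nra. dmax; dabs; lra.
Qed.

Lemma Kf_conv a b lo hi e : lo <= e <= hi -> Kf a b e <= Rmax (Kf a b lo) (Kf a b hi).
Proof.
  intros. rewrite !Kf_abs.
  pose proof (lin_abs (2 * (b - a)) (a * a - b * b) lo hi e H).
  unfold sq. replace ((a - e) * (a - e) - (b - e) * (b - e)) with (2 * (b - a) * e + (a * a - b * b)) by ring.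
  replace ((a - lo) * (a - lo) - (b - lo) * (b - lo)) with (2 * (b - a) * lo + (a * a - b * b)) by ring.
  replace ((a - hi) * (a - hi) - (b - hi) * (b - hi)) with (2 * (b - a) * hi + (a * a - b * b)) by ring.
  auto.
Qed.

Lemma sq_conv a lo hi e : lo <= e <= hi -> sq (a - e) <= Rmax (sq (a - lo)) (sq (a - hi)).
Proof. intros. pose proof (sq_between (a - hi) (a - lo) (a - e) ltac:(lra)). rewrite Rmax_comm. auto. Qed.

Lemma Rmax_trans3 a b c : a <= b \/ a <= c -> a <= Rmax b c.
Proof. intros [H|H]; [eapply Rle_trans; [apply H|apply Rmax_l]|eapply Rle_trans; [apply H|apply Rmax_r]]. Qed.

Lemma Phi_conv L U a lo hi e : lo <= e <= hi -> Phi L U a e <= mx (Phi L U a lo) (Phi L U a hi).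
Proof.
  intros He. pose proof (Kf_conv a L lo hi e He). pose proof (Kf_conv a U lo hi e He).
  pose proof (sq_conv a lo hi e He). unfold Phi in *. rewrite !mx_Rmax in *.
  apply Rmax_lub; [apply Rmax_lub|].
  - eapply Rle_trans; [apply H|]. apply Rmax_lub; apply Rmax_trans3; [left|right]; apply Rmax_trans3; left; apply Rmax_l.
  - eapply Rle_trans; [apply H0|]. apply Rmax_lub; apply Rmax_trans3; [left|right]; apply Rmax_trans3; left; apply Rmax_r.
  - eapply Rle_trans; [apply H1|]. apply Rmax_lub; apply Rmax_trans3; [left|right]; apply Rmax_r.
Qed.

Lemma Psi_conv L U lo hi e : lo <= e <= hi -> Psi L U e <= mx (Psi L U lo) (Psi L U hi).
Proof.
  intros He. unfold Psi. rewrite !mx_Rmax.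
  pose proof (sq_conv L lo hi e He). pose proof (sq_conv U lo hi e He).
  apply Rmax_lub.
  - eapply Rle_trans; [apply H|]. apply Rmax_lub; apply Rmax_trans3; [left|right]; apply Rmax_l.
  - eapply Rle_trans; [apply H0|]. apply Rmax_lub; apply Rmax_trans3; [left|right]; apply Rmax_r.
Qed.

Lemma mx_scal c a b : 0 <= c -> c * mx a b = mx (c * a) (c * b).
Proof. intros. rewrite !mx_Rmax. unfold Rmax. repeat destruct (Rle_dec _ _); nra. Qed.

Lemma mx_l a b : a <= mx a b.
Proof. rewrite mx_Rmax. apply Rmax_l. Qed.
Lemma mx_r a b : b <= mx a b.
Proof. rewrite mx_Rmax. apply Rmax_r. Qed.
Lemma mx_lub a b c : a <= c -> b <= c -> mx a b <= c.
Proof. rewrite mx_Rmax. apply Rmax_lub. Qed.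

Lemma exp_le x y : x <= y -> exp x <= exp y.
Proof. intros H. destruct (Rle_lt_or_eq_dec _ _ H). left; apply exp_increasing; auto. subst; lra. Qed.

Lemma cntN_INR n D : INR (cntN n D) = sumR n (fun i => if D i then 1 else 0).
Proof. induction n; simpl cntN; simpl sumR; auto. rewrite plus_INR, IHn. destruct (D n); simpl; lra. Qed.

Lemma dist_le_cnt n x y E : (forall i, (i < n)%nat -> E i = false -> x i = y i) -> (Defs.dist n x y <= cntN n E)%nat.
Proof.
  induction n; simpl; intros H; auto.
  specialize (IHn ltac:(intros; apply H; auto)). destruct (E n) eqn:En.
  - destruct (Req_EM_T (x n) (y n)); lia.
  - rewrite (H n) by auto. destruct (Req_EM_T (y n) (y n)); [lia|congruence].
Qed.

Lemma Kf_self a e : Kf a e e = sq (a - e).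
Proof. rewrite Kf_abs. unfold sq at 2. replace ((e - e) * (e - e)) with 0 by ring.
  rewrite Rminus_0_r. apply Rabs_pos_eq, sq_nn. Qed.
Lemma Kf_self2 e b : Kf e b e = sq (b - e).
Proof. rewrite Kf_abs. unfold sq at 1. replace ((e - e) * (e - e)) with 0 by ring.
  rewrite Rminus_0_l, Rabs_Ropp. apply Rabs_pos_eq, sq_nn. Qed.
Lemma Kf_nn a b e : 0 <= Kf a b e.
Proof. rewrite Kf_abs. apply Rabs_pos. Qed.
Lemma Phi_nn L U a e : 0 <= Phi L U a e.
Proof. unfold Phi. eapply Rle_trans; [|apply mx_r]. apply sq_nn. Qed.

Section Main.
Variables (n : nat) (L U beta : R) (x : nat -> R).
Hypotheses (Hn : (2 <= n)%nat) (HLU : L < U) (Hb : 0 < beta) (Hx : inbox n L U x).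

Let c' := (INR n - 1) / (INR n * INR n).
Lemma INRn2 : 2 <= INR n.
Proof. replace 2 with (INR 2) by (simpl; lra). apply le_INR; auto. Qed.
Lemma c'_nn : 0 <= c'.
Proof. pose proof INRn2. unfold c'. apply Rmult_le_pos; [lra|]. left. apply Rinv_0_lt_compat. nra. Qed.
Lemma cn_eq : cn n = c'.
Proof. pose proof INRn2. unfold cn, c'. rewrite minus_INR, mult_INR by lia. rewrite dv_eq by nra. simpl. auto. Qed.
Lemma INRnm1 : INR (n - 1) = INR n - 1.
Proof. rewrite minus_INR by lia. simpl. auto. Qed.

Definition mo y j := (sumR n y - y j) / (INR n - 1).

Lemma osum_box y j : inbox n L U y -> (j < n)%nat ->
  (INR n - 1) * L <= sumR n y - y j <= (INR n - 1) * U.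
Proof.
  intros Hy Hj. split.
  - pose proof (sumR_upd n y (updR y j L) j Hj ltac:(intros; unfold updR; destruct (Nat.eqb_spec i j); [lia|auto])).
    assert (sumR n (fun _ => L) <= sumR n (updR y j L)) by
      (apply sumR_le; intros; unfold updR; destruct (Nat.eqb i j); [lra|apply Hy; auto]).
    rewrite sumR_const in H0. unfold updR in H at 2. rewrite Nat.eqb_refl in H. lra.
  - pose proof (sumR_upd n y (updR y j U) j Hj ltac:(intros; unfold updR; destruct (Nat.eqb_spec i j); [lia|auto])).
    assert (sumR n (updR y j U) <= sumR n (fun _ => U)) by
      (apply sumR_le; intros; unfold updR; destruct (Nat.eqb i j); [lra|apply Hy; auto]).
    rewrite sumR_const in H0. unfold updR in H at 2. rewrite Nat.eqb_refl in H. lra.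
Qed.

Lemma mo_box y j : inbox n L U y -> (j < n)%nat -> L <= mo y j <= U.
Proof.
  intros. pose proof (osum_box y j H H0). pose proof INRn2. unfold mo.
  split; [apply Rmult_le_reg_r with (INR n - 1) | apply Rmult_le_reg_r with (INR n - 1)]; try lra;
  field_simplify; lra.
Qed.

Lemma LS_diff y z j : (j < n)%nat -> (forall i, (i < n)%nat -> i <> j -> y i = z i) ->
  Rabs (variance n y - variance n z) = c' * Kf (y j) (z j) (mo y j).
Proof.
  intros. rewrite (var_diff n y z j Hn H H0). rewrite Rabs_mult, Rabs_pos_eq by apply c'_nn.
  rewrite Kf_abs. auto.
Qed.

Lemma LS_elem y w : inbox n L U y -> LSset n L U y w ->
  exists j b, (j < n)%nat /\ L <= b <= U /\ w = c' * Kf (y j) b (mo y j).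
Proof.
  intros Hy [z [Hz [Hd Hw]]]. destruct (dist1 n y z Hd) as [j [Hj [_ Hij]]].
  exists j, (z j). split; auto. split; [apply Hz; auto|]. subst w. apply LS_diff; auto.
Qed.

Lemma LS_bound y w : inbox n L U y -> LSset n L U y w -> 0 <= w <= c' * sq (U - L).
Proof.
  intros Hy Hw. destruct (LS_elem y w Hy Hw) as [j [b [Hj [Hb' ->]]]].
  pose proof c'_nn. pose proof (Kf_nn (y j) b (mo y j)).
  pose proof (K_Psi L U (y j) b (mo y j) (Hy j Hj) Hb').
  pose proof (Psi_bound L U (mo y j) (mo_box y j Hy Hj)).
  split; [nra|]. apply Rmult_le_compat_l; lra.
Qed.

Lemma LS_ne y : inbox n L U y -> exists w, LSset n L U y w.
Proof.
  intros Hy. set (b := if Req_EM_T (y 0%nat) L then U else L).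
  assert (Hb1 : b <> y 0%nat) by (unfold b; destruct (Req_EM_T (y 0%nat) L); lra).
  assert (Hb2 : L <= b <= U) by (unfold b; destruct (Req_EM_T (y 0%nat) L); lra).
  eexists. exists (updR y 0 b). split; [apply updR_box; auto|]. split; [apply dist_upd; auto; lia|]. reflexivity.
Qed.

Lemma LS_lub y : inbox n L U y -> exists l, is_lub (LSset n L U y) l /\ 0 <= l.
Proof.
  intros Hy. destruct (completeness (LSset n L U y)) as [l Hl].
  - exists (c' * sq (U - L)). intros w Hw. apply (LS_bound y w Hy Hw).
  - apply LS_ne; auto.
  - exists l. split; auto. destruct (LS_ne y Hy) as [w Hw]. pose proof (LS_bound y w Hy Hw).
    pose proof (proj1 Hl w Hw). lra.
Qed.

Lemma LS_ge y l j b : inbox n L U y -> is_lub (LSset n L U y) l -> 0 <= l -> (j < n)%nat -> L <= b <= U ->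
  c' * Kf (y j) b (mo y j) <= l.
Proof.
  intros Hy Hl Hl0 Hj Hb'. destruct (Req_EM_T b (y j)).
  - subst b. rewrite Kf_abs. replace (sq (y j - mo y j) - sq (y j - mo y j)) with 0 by ring.
    rewrite Rabs_R0. lra.
  - apply (proj1 Hl). exists (updR y j b). split; [apply updR_box; auto|].
    split; [apply dist_upd; auto|].
    rewrite LS_diff with (j := j); auto.
    + unfold updR. rewrite Nat.eqb_refl. auto.
    + intros. unfold updR. destruct (Nat.eqb_spec i j); [lia|auto].
Qed.

Lemma others_sum y D j : (j < n)%nat -> D j = false ->
  (forall i, (i < n)%nat -> D i = false -> i <> j -> y i = x i) ->
  sumR n y - y j = sumR n x - x j - sumD n D x + sumD n D y.
Proof.
  intros Hj Dj H.
  pose proof (sumR_upd n y (updR y j 0) j Hj ltac:(intros; unfold updR; destruct (Nat.eqb_spec i j); [lia|auto])).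
  pose proof (sumR_upd n x (updR x j 0) j Hj ltac:(intros; unfold updR; destruct (Nat.eqb_spec i j); [lia|auto])).
  unfold updR in H0 at 2, H1 at 2. rewrite Nat.eqb_refl in H0, H1.
  assert (sumR n (updR y j 0) = sumR n (updR x j 0) - sumD n D x + sumD n D y).
  { unfold sumD. rewrite <- sumR_minus, <- sumR_plus. apply sumR_ext. intros i Hi. unfold updR.
    destruct (Nat.eqb_spec i j). { subst. rewrite Dj. ring. }
    destruct (D i) eqn:Di; [ring|]. rewrite H by auto. ring. }
  lra.
Qed.

Notation cnd := (cand n L U beta x).
Notation aK := (accK n L U beta x).
Notation aJ := (accJ n L U beta x).

Lemma accK_ge_a a j k : a <= aK a j k.
Proof. induction k; simpl; [lra|]. eapply Rle_trans; [apply IHk|apply mx_l]. Qed.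
Lemma accK_ge_c a j k k' : (k' < k)%nat -> cnd j k' <= aK a j k.
Proof. induction k; intros; [lia|]. simpl. destruct (Nat.eq_dec k' k).
  - subst. apply mx_r.
  - eapply Rle_trans; [apply IHk; lia|apply mx_l]. Qed.
Lemma accJ_mono j1 j2 : (j1 <= j2)%nat -> aJ j1 <= aJ j2.
Proof. induction 1; [lra|]. simpl. eapply Rle_trans; [apply IHle|apply accK_ge_a]. Qed.
Lemma cand_le_acc j k : (j < n)%nat -> (k < n)%nat -> cnd j k <= aJ n.
Proof. intros. eapply Rle_trans; [|apply (accJ_mono (S j) n); lia]. simpl. apply accK_ge_c; auto. Qed.
Lemma accK_att a j k : aK a j k = a \/ exists k', (k' < k)%nat /\ aK a j k = cnd j k'.
Proof. induction k; simpl; auto. destruct (mx_cases (aK a j k) (cnd j k)) as [M|M]; rewrite M.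
  - destruct IHk as [?|[k' [? ?]]]; auto. right. exists k'. split; auto; lia.
  - right. exists k. split; auto. Qed.
Lemma accJ_att j : aJ j = 0 \/ exists j' k, (j' < j)%nat /\ (k < n)%nat /\ aJ j = cnd j' k.
Proof. induction j; simpl; auto. destruct (accK_att (aJ j) j n) as [M|[k [? M]]]; rewrite M.
  - destruct IHj as [?|[j' [k [? [? ?]]]]]; auto. right. exists j', k. repeat split; auto; lia.
  - right. exists j, k. repeat split; auto. Qed.

Lemma upper y w : inbox n L U y -> LSset n L U y w ->
  w * exp (- beta * INR (Defs.dist n x y)) <= c' * aJ n.
Proof.
  intros Hy Hw. destruct (LS_elem y w Hy Hw) as [j [b [Hj [Hb' ->]]]].
  set (Do := fun i => andb (negb (Nat.eqb i j)) (if Req_EM_T (x i) (y i) then false else true)).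
  assert (Doj : Do j = false) by (unfold Do; rewrite Nat.eqb_refl; auto).
  set (k := cntN n Do).
  assert (Hk : (k < n)%nat) by (pose proof (cntN_le_j n Do j Hj Doj); unfold k; lia).
  assert (Hd : INR (Defs.dist n x y) = (if Req_EM_T (x j) (y j) then 0 else 1) + INR k).
  { rewrite dist_INR. unfold k. rewrite cntN_INR.
    rewrite (sumR_upd n (fun i => if Do i then 1 else 0) _ j Hj).
    - rewrite Doj. lra.
    - intros. unfold Do. destruct (Nat.eqb_spec i j); [lia|]. simpl. destruct (Req_EM_T (x i) (y i)); auto. }
  assert (Hos : sumR n y - y j = sumR n x - x j - sumD n Do x + sumD n Do y).
  { apply others_sum; auto. intros. unfold Do in H0. destruct (Nat.eqb_spec i j); [lia|]. simpl in H0.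
    destruct (Req_EM_T (x i) (y i)); [auto|discriminate]. }
  pose proof (topk_up x n j k Do Hj Doj eq_refl).
  pose proof (botk_up x n j k Do Hj Doj eq_refl).
  pose proof (sumD_bounds n Do y L U ltac:(intros; apply Hy; auto)).
  fold k in H1. pose proof INRn2.
  assert (Hm : lo n L x j k <= mo y j <= hi n U x j k).
  { unfold lo, hi, mo. rewrite INRnm1, bestf_full. rewrite !dv_eq by lra. rewrite Hos.
    split; apply Rmult_le_compat_r; try (left; apply Rinv_0_lt_compat; lra); lra. }
  pose proof c'_nn. pose proof (cand_le_acc j k Hj Hk).
  assert (Hc: forall t, c' * cnd j k <= t -> c' * Kf (y j) b (mo y j) * exp (- beta * INR (Defs.dist n x y)) <= t).
  2:{ apply Hc. apply Rmult_le_compat_l; auto. }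
  intros t Ht. eapply Rle_trans; [|apply Ht]. rewrite Hd.
  destruct (Req_EM_T (x j) (y j)) as [Exy|Exy].
  - rewrite <- Exy. replace (- beta * (0 + INR k)) with (0 - beta * INR k) by ring. fold (Ek beta k).
    pose proof (K_Phi L U (x j) b (mo y j) Hb'). pose proof (Phi_conv L U (x j) _ _ _ Hm).
    rewrite <- Exy in *.
    assert (0 <= Ek beta k) by (left; apply exp_pos).
    rewrite Rmult_assoc. apply Rmult_le_compat_l; auto.
    unfold cand. eapply Rle_trans; [|apply mx_l]. rewrite <- mx_scal by auto.
    rewrite Rmult_comm. apply Rmult_le_compat_l; auto. lra.
  - replace (- beta * (1 + INR k)) with (0 - beta * INR (k + 1)) by (rewrite plus_INR; simpl; ring). fold (Ek beta (k+1)).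
    pose proof (K_Psi L U (y j) b (mo y j) (Hy j Hj) Hb'). pose proof (Psi_conv L U _ _ _ Hm).
    assert (0 <= Ek beta (k+1)) by (left; apply exp_pos).
    rewrite Rmult_assoc. apply Rmult_le_compat_l; auto.
    unfold cand. eapply Rle_trans; [|apply mx_r]. rewrite <- mx_scal by auto.
    rewrite Rmult_comm. apply Rmult_le_compat_l; auto. lra.
Qed.


Lemma SS_mem y l : inbox n L U y -> is_lub (LSset n L U y) l ->
  SSset n L U beta x (l * exp (- beta * INR (Defs.dist n x y))).
Proof. intros. exists y. split; auto. exists l. split; auto. Qed.

Lemma ach_gen D j k c e : (j < n)%nat -> D j = false -> cntN n D = k -> L <= c <= U ->
  e = mo (fun i => if D i then c else x i) j ->
  (exists v, SSset n L U beta x v /\ c' * (Ek beta k * Phi L U (x j) e) <= v) /\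
  (exists v, SSset n L U beta x v /\ c' * (Ek beta (k + 1) * Psi L U e) <= v).
Proof.
  intros Hj Dj Hc Hcb He. set (y := fun i => if D i then c else x i).
  assert (Hy : inbox n L U y) by (intros i Hi; unfold y; destruct (D i); auto).
  assert (Hyj : y j = x j) by (unfold y; rewrite Dj; auto).
  pose proof c'_nn.
  assert (Heb : L <= e <= U) by (rewrite He; apply mo_box; auto).
  split.
  - destruct (LS_lub y Hy) as [l [Hl Hl0]]. eexists. split; [apply SS_mem; eauto|].
    assert (c' * Phi L U (x j) e <= l).
    { unfold Phi. rewrite mx_scal, mx_scal by auto. rewrite <- Hyj, He.
      change (fun i : nat => if D i then c else x i) with y. rewrite <- Kf_self.
      apply mx_lub; [apply mx_lub|]; apply LS_ge; auto; first [lra | apply mo_box; auto]. }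
    assert (Ek beta k <= exp (- beta * INR (Defs.dist n x y))).
    { unfold Ek. apply exp_le. pose proof (dist_le_cnt n x y D ltac:(intros; unfold y; rewrite H2; auto)).
      apply le_INR in H1. rewrite Hc in H1. nra. }
    assert (0 <= Ek beta k) by (left; apply exp_pos).
    replace (c' * (Ek beta k * Phi L U (x j) e)) with ((c' * Phi L U (x j) e) * Ek beta k) by ring.
    apply Rmult_le_compat; auto. apply Rmult_le_pos; auto. apply Phi_nn.
  - set (y' := updR y j e).
    assert (Hy' : inbox n L U y') by (apply updR_box; auto).
    assert (Hmo : mo y' j = e).
    { rewrite He. fold y. unfold mo. f_equal.
      rewrite (sumR_upd n y y' j Hj) by (intros; unfold y', updR; destruct (Nat.eqb_spec i j); [lia|auto]).
      unfold y', updR. rewrite Nat.eqb_refl. ring. }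
    assert (Hy'j : y' j = e) by (unfold y', updR; rewrite Nat.eqb_refl; auto).
    destruct (LS_lub y' Hy') as [l [Hl Hl0]]. eexists. split; [apply SS_mem; eauto|].
    assert (c' * Psi L U e <= l).
    { unfold Psi. rewrite mx_scal by auto.
      rewrite <- (Kf_self2 e L), <- (Kf_self2 e U). rewrite <- Hy'j at 1 3. rewrite <- Hmo.
      apply mx_lub; apply LS_ge; auto; lra. }
    assert (Ek beta (k+1) <= exp (- beta * INR (Defs.dist n x y'))).
    { unfold Ek. apply exp_le.
      pose proof (dist_le_cnt n x y' (updB D j true)).
      assert (Defs.dist n x y' <= cntN n (updB D j true))%nat.
      { apply H1. intros i Hi Ei. unfold updB in Ei. unfold y', updR, y.
        destruct (Nat.eqb_spec i j); [discriminate|]. rewrite Ei. auto. }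
      pose proof (cntN_upd n D j true Hj). rewrite Dj in H3.
      assert (Defs.dist n x y' <= k + 1)%nat by lia.
      apply le_INR in H4. nra. }
    assert (0 <= Ek beta (k+1)) by (left; apply exp_pos).
    replace (c' * (Ek beta (k+1) * Psi L U e)) with ((c' * Psi L U e) * Ek beta (k+1)) by ring.
    apply Rmult_le_compat; auto. apply Rmult_le_pos; auto. apply Psi_nonneg.
Qed.

Lemma cand_ach j k : (j < n)%nat -> (k < n)%nat -> exists v, SSset n L U beta x v /\ c' * cnd j k <= v.
Proof.
  intros Hj Hk. pose proof INRn2.
  destruct (topk_ach x n j k Hj Hk) as [D1 [D1j [D1c D1s]]].
  destruct (botk_ach x n j k Hj Hk) as [D2 [D2j [D2c D2s]]].
  assert (Hlo : lo n L x j k = mo (fun i => if D1 i then L else x i) j).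
  { unfold lo, mo. rewrite INRnm1, dv_eq by lra. f_equal. rewrite bestf_full.
    pose proof (others_sum (fun i => if D1 i then L else x i) D1 j Hj D1j
      ltac:(intros i0 Hi0 Hd Hij; cbv beta; rewrite Hd; auto)) as HH. cbv beta in HH. rewrite HH.
    rewrite D1s. f_equal. pose proof (sumD_bounds n D1 (fun i => if D1 i then L else x i) L L).
    rewrite D1c in H0. assert (forall i, (i < n)%nat -> D1 i = true -> L <= (if D1 i then L else x i) <= L)
      by (intros; rewrite H2; lra). specialize (H0 H1). lra. }
  assert (Hhi : hi n U x j k = mo (fun i => if D2 i then U else x i) j).
  { unfold hi, mo. rewrite INRnm1, dv_eq by lra. f_equal. rewrite bestf_full.
    pose proof (others_sum (fun i => if D2 i then U else x i) D2 j Hj D2j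
      ltac:(intros i0 Hi0 Hd Hij; cbv beta; rewrite Hd; auto)) as HH. cbv beta in HH. rewrite HH.
    rewrite D2s. f_equal. pose proof (sumD_bounds n D2 (fun i => if D2 i then U else x i) U U).
    rewrite D2c in H0. assert (forall i, (i < n)%nat -> D2 i = true -> U <= (if D2 i then U else x i) <= U)
      by (intros; rewrite H2; lra). specialize (H0 H1). lra. }
  destruct (ach_gen D1 j k L _ Hj D1j D1c ltac:(lra) Hlo) as [[v1 [? ?]] [v3 [? ?]]].
  destruct (ach_gen D2 j k U _ Hj D2j D2c ltac:(lra) Hhi) as [[v2 [? ?]] [v4 [? ?]]].
  unfold cand.
  destruct (mx_cases (mx (Ek beta k * Phi L U (x j) (lo n L x j k)) (Ek beta k * Phi L U (x j) (hi n U x j k)))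
     (mx (Ek beta (k + 1) * Psi L U (lo n L x j k)) (Ek beta (k + 1) * Psi L U (hi n U x j k)))) as [M|M]; rewrite M.
  - destruct (mx_cases (Ek beta k * Phi L U (x j) (lo n L x j k)) (Ek beta k * Phi L U (x j) (hi n U x j k))) as [M'|M'];
      rewrite M'; eauto.
  - destruct (mx_cases (Ek beta (k + 1) * Psi L U (lo n L x j k)) (Ek beta (k + 1) * Psi L U (hi n U x j k))) as [M'|M'];
      rewrite M'; eauto.
Qed.

Lemma SS_nn v : SSset n L U beta x v -> 0 <= v.
Proof. intros [y [Hy [l [Hl ->]]]]. destruct (LS_lub y Hy) as [l' [Hl' Hl0]].
  assert (l = l') by (eapply is_lub_u; eauto). subst. apply Rmult_le_pos; auto. left; apply exp_pos. Qed.

Lemma main2 : is_lub (SSset n L U beta x) (cn n * aJ n).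
Proof.
  rewrite cn_eq. pose proof c'_nn. split.
  - intros v [y [Hy [l [Hl ->]]]].
    set (E := exp (- beta * INR (Defs.dist n x y))). assert (0 < E) by apply exp_pos.
    assert (l <= c' * aJ n / E).
    { apply (proj2 Hl). intros w Hw. pose proof (upper y w Hy Hw). fold E in H1.
      apply Rmult_le_reg_r with E; auto. unfold Rdiv. rewrite Rmult_assoc, Rinv_l by lra. lra. }
    apply Rmult_le_reg_r with (/ E). apply Rinv_0_lt_compat; auto.
    rewrite Rmult_assoc, Rinv_r by lra. lra.
  - intros B HB. destruct (accJ_att n) as [M|[j [k [Hj [Hk M]]]]]; rewrite M.
    + destruct (cand_ach 0 0 ltac:(lia) ltac:(lia)) as [v [Hv _]]. pose proof (SS_nn v Hv).
      pose proof (HB v Hv). lra.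
    + destruct (cand_ach j k Hj Hk) as [v [Hv Hle]]. pose proof (HB v Hv). lra.
Qed.

End Main.

Lemma main1 L U beta x : L < U -> is_lub (SSset 1 L U beta x) (cn 1 * accJ 1 L U beta x 1).
Proof.
  intros HLU. replace (cn 1) with 0 by (unfold cn; simpl; rewrite dv_eq by lra; field). rewrite Rmult_0_l.
  assert (HLS : forall y w, LSset 1 L U y w -> w = 0).
  { intros y w [z [_ [_ ->]]]. rewrite !var1. rewrite Rminus_0_r. apply Rabs_R0. }
  assert (HLSne : forall y, inbox 1 L U y -> LSset 1 L U y 0).
  { intros y Hy. set (b := if Req_EM_T (y 0%nat) L then U else L).
    assert (Hb1 : b <> y 0%nat) by (unfold b; destruct (Req_EM_T (y 0%nat) L); lra).
    assert (Hb2 : L <= b <= U) by (unfold b; destruct (Req_EM_T (y 0%nat) L); lra).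
    exists (updR y 0 b). split; [apply updR_box; auto|]. split; [apply dist_upd; auto; lia|].
    rewrite !var1. rewrite Rminus_0_r. symmetry. apply Rabs_R0. }
  assert (Hlub : forall y l, inbox 1 L U y -> is_lub (LSset 1 L U y) l -> l = 0).
  { intros y l Hy Hl. pose proof (proj1 Hl 0 (HLSne y Hy)).
    assert (l <= 0) by (apply (proj2 Hl); intros w Hw; rewrite (HLS y w Hw); lra). lra. }
  split.
  - intros v [y [Hy [l [Hl ->]]]]. rewrite (Hlub y l Hy Hl). lra.
  - intros B HB. assert (Hx : inbox 1 L U (fun _ => L)) by (intros i _; lra).
    assert (is_lub (LSset 1 L U (fun _ => L)) 0).
    { split. intros w Hw; rewrite (HLS _ w Hw); lra. intros b Hb. apply Hb. apply HLSne; auto. }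
    apply HB. exists (fun _ => L). split; auto. exists 0. split; auto. ring.
Qed.

Theorem main_math n L U beta x : (1 <= n)%nat -> L < U -> 0 < beta -> inbox n L U x ->
  is_lub (SSset n L U beta x) (cn n * accJ n L U beta x n).
Proof.
  intros Hn HLU Hb Hx. destruct (Nat.eq_dec n 1).
  - subst. apply main1; auto.
  - apply main2; auto. lia.
Qed.


Definition prog : list instr := [
  NConst 1 1;
  NConst 2 10;
  NMul 3 2 0;
  NConst 4 1007;
  NAdd 3 3 4;
  RStoreI 3 0;
  NAdd 3 3 1;
  RStoreI 3 1;
  NAdd 3 3 1;
  RStoreI 3 2;
  NConst 9 0;
  NAdd 6 0 9;
  JNZ 6 22;
  NConst 4 2;
  NAdd 4 6 4;
  NMul 5 6 2;
  NConst 8 990;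
  NAdd 5 5 8;
  RLoadI 0 4;
  RStoreI 5 0;
  NSub 6 6 1;
  Jmp 12;
  NMul 3 2 0;
  NConst 4 1007;
  NAdd 3 3 4;
  RLoadI 3 3;
  NAdd 3 3 1;
  RLoadI 4 3;
  NAdd 3 3 1;
  RLoadI 5 3;
  RofN 6 9;
  NConst 3 1001;
  RStoreI 3 6;
  NConst 3 1002;
  RStoreI 3 6;
  NConst 6 0;
  NSub 8 0 6;
  JNZ 8 81;
  NMul 3 6 2;
  NConst 4 1000;
  NAdd 3 3 4;
  RLoadI 7 3;
  RSub 8 6 7;
  NAdd 4 3 1;
  RLoadI 9 4;
  RAdd 9 9 7;
  NAdd 5 4 2;
  RStoreI 5 9;
  NAdd 4 4 1;
  RLoadI 9 4;
  RAdd 9 9 8;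
  NAdd 5 4 2;
  RStoreI 5 9;
  NAdd 7 6 9;
  JNZ 7 79;
  NMul 3 7 2;
  NConst 4 1001;
  NAdd 3 3 4;
  NSub 4 3 2;
  RLoadI 10 3;
  RLoadI 11 4;
  RAdd 11 11 7;
  RCopy 12 10;
  JRLt 10 11 65;
  Jmp 66;
  RCopy 12 11;
  RStoreI 3 12;
  NAdd 3 3 1;
  NAdd 4 4 1;
  RLoadI 10 3;
  RLoadI 11 4;
  RAdd 11 11 8;
  RCopy 12 10;
  JRLt 10 11 75;
  Jmp 76;
  RCopy 12 11;
  RStoreI 3 12;
  NSub 7 7 1;
  Jmp 54;
  NAdd 6 6 1;
  Jmp 36;
  NMul 3 0 2;
  NConst 4 1001;
  NAdd 3 3 4;
  RLoadI 13 3;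
  NSub 3 0 1;
  RofN 14 3;
  RCopy 15 6;
  NConst 6 0;
  NSub 8 0 6;
  JNZ 8 232;
  NMul 3 6 2;
  NConst 4 1000;
  NAdd 3 3 4;
  RLoadI 16 3;
  NConst 7 0;
  NSub 8 0 7;
  JNZ 8 230;
  NMul 3 7 2;
  NConst 4 1001;
  NAdd 3 3 4;
  NAdd 4 3 2;
  RLoadI 17 3;
  RLoadI 18 4;
  NAdd 3 3 1;
  NAdd 4 4 1;
  RLoadI 19 3;
  RLoadI 20 4;
  RSub 18 18 16;
  RCopy 21 17;
  JRLt 18 17 112;
  Jmp 113;
  RCopy 21 18;
  RSub 19 6 19;
  RSub 20 6 20;
  RSub 20 20 16;
  RCopy 22 19;
  JRLt 19 20 119;
  Jmp 120;
  RCopy 22 20;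
  RofN 23 7;
  NAdd 5 7 1;
  RofN 24 5;
  RSub 25 13 16;
  RSub 25 25 21;
  RMul 26 23 3;
  RAdd 25 25 26;
  RDiv 25 25 14;
  RSub 27 13 16;
  RSub 27 27 22;
  RMul 26 23 4;
  RAdd 27 27 26;
  RDiv 27 27 14;
  RMul 28 5 23;
  RSub 28 6 28;
  RExp 28 28;
  RMul 29 5 24;
  RSub 29 6 29;
  RExp 29 29;
  RSub 40 16 25;
  RMul 40 40 40;
  RSub 41 3 25;
  RMul 41 41 41;
  RSub 42 4 25;
  RMul 42 42 42;
  RSub 43 40 41;
  RSub 44 6 43;
  RCopy 45 43;
  JRLt 43 44 150;
  Jmp 151;
  RCopy 45 44;
  RSub 43 40 42;
  RSub 44 6 43;
  RCopy 46 43;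
  JRLt 43 44 156;
  Jmp 157;
  RCopy 46 44;
  RCopy 47 45;
  JRLt 45 46 160;
  Jmp 161;
  RCopy 47 46;
  RCopy 30 47;
  JRLt 47 40 164;
  Jmp 165;
  RCopy 30 40;
  RSub 40 16 27;
  RMul 40 40 40;
  RSub 41 3 27;
  RMul 41 41 41;
  RSub 42 4 27;
  RMul 42 42 42;
  RSub 43 40 41;
  RSub 44 6 43;
  RCopy 45 43;
  JRLt 43 44 176;
  Jmp 177;
  RCopy 45 44;
  RSub 43 40 42;
  RSub 44 6 43;
  RCopy 46 43;
  JRLt 43 44 182;
  Jmp 183;
  RCopy 46 44;
  RCopy 47 45;
  JRLt 45 46 186;
  Jmp 187;
  RCopy 47 46;
  RCopy 31 47;
  JRLt 47 40 190;
  Jmp 191;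
  RCopy 31 40;
  RSub 41 3 25;
  RMul 41 41 41;
  RSub 42 4 25;
  RMul 42 42 42;
  RCopy 32 41;
  JRLt 41 42 198;
  Jmp 199;
  RCopy 32 42;
  RSub 41 3 27;
  RMul 41 41 41;
  RSub 42 4 27;
  RMul 42 42 42;
  RCopy 33 41;
  JRLt 41 42 206;
  Jmp 207;
  RCopy 33 42;
  RMul 30 28 30;
  RMul 31 28 31;
  RMul 32 29 32;
  RMul 33 29 33;
  RCopy 34 30;
  JRLt 30 31 214;
  Jmp 215;
  RCopy 34 31;
  RCopy 35 32;
  JRLt 32 33 218;
  Jmp 219;
  RCopy 35 33;
  RCopy 36 34;
  JRLt 34 35 222;
  Jmp 223;
  RCopy 36 35;
  RCopy 37 15;
  JRLt 15 36 226;
  Jmp 227;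
  RCopy 37 36;
  RCopy 15 37;
  NAdd 7 7 1;
  Jmp 96;
  NAdd 6 6 1;
  Jmp 89;
  NMul 3 0 0;
  RofN 38 3;
  NSub 4 0 1;
  RofN 39 4;
  RDiv 40 39 38;
  RMul 0 40 15;
  Halt
].

Definition wp (p : list instr) (s : state) (B : nat) (Q : state -> Prop) : Prop :=
  exists t, (t <= B)%nat /\ Q (run p t s).

Lemma run_halted p t s : step p s = None -> run p t s = s.
Proof. destruct t; simpl; auto. intros ->. auto. Qed.

Lemma run_add p t1 t2 s : run p (t1 + t2) s = run p t2 (run p t1 s).
Proof.
  revert s. induction t1; intros s; simpl; auto.
  destruct (step p s) eqn:E; auto. symmetry. apply run_halted; auto.
Qed.

Lemma wp_done p s B Q : Q s -> wp p s B Q.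
Proof. intros. exists 0%nat. split; [lia|auto]. Qed.

Lemma wp_step p s s' B Q : step p s = Some s' -> wp p s' B Q -> wp p s (S B) Q.
Proof. intros H [t [Ht HQ]]. exists (S t). split; [lia|]. simpl. rewrite H. auto. Qed.

Lemma wp_mono p s B B' Q : (B <= B')%nat -> wp p s B Q -> wp p s B' Q.
Proof. intros H [t [Ht HQ]]. exists t. split; [lia|auto]. Qed.

Lemma wp_conseq p s B (Q Q' : state -> Prop) : (forall s, Q s -> Q' s) -> wp p s B Q -> wp p s B Q'.
Proof. intros H [t [Ht HQ]]. exists t. split; auto. Qed.

Lemma wp_seq p s B1 B2 Q : wp p s B1 (fun s1 => wp p s1 B2 Q) -> wp p s (B1 + B2) Q.
Proof. intros [t1 [H1 [t2 [H2 HQ]]]]. exists (t1 + t2)%nat. split; [lia|]. rewrite run_add. auto. Qed.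

Lemma wp_loop p (I : nat -> state -> Prop) (m Bb Be : nat) (Q : state -> Prop) :
  (forall q s, (q < m)%nat -> I q s -> wp p s Bb (I (S q))) ->
  (forall s, I m s -> wp p s Be Q) ->
  forall s, I 0%nat s -> wp p s (m * Bb + Be) Q.
Proof.
  intros Hb He.
  assert (G : forall d q s, (q + d = m)%nat -> I q s -> wp p s (d * Bb + Be) Q).
  { induction d; intros q s Hq Hs.
    - simpl. replace q with m in Hs by lia. auto.
    - replace (S d * Bb + Be)%nat with (Bb + (d * Bb + Be))%nat by lia.
      apply wp_seq. eapply wp_conseq; [|apply (Hb q s); [lia|eauto]].
      intros s1 Hs1. apply (IHd (S q)); auto; lia. }
  intros s Hs. apply (G m 0%nat); auto.
Qed.

Section Rules.
Variables (p : list instr) (pc0 : nat) (N : nat -> nat) (Rr : nat -> R) (B : nat) (Q : state -> Prop).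

Lemma w_RCopy d a : nth_error p pc0 = Some (RCopy d a) ->
  (forall v, v = Rr a -> wp p (mkState (S pc0) N (updR Rr d v)) B Q) -> wp p (mkState pc0 N Rr) (S B) Q.
Proof. intros H K. eapply wp_step; [|apply (K _ eq_refl)]. unfold step; cbn [pc Nm Rm next]. rewrite H. reflexivity. Qed.
Lemma w_RAdd d a b : nth_error p pc0 = Some (RAdd d a b) ->
  (forall v, v = Rr a + Rr b -> wp p (mkState (S pc0) N (updR Rr d v)) B Q) -> wp p (mkState pc0 N Rr) (S B) Q.
Proof. intros H K. eapply wp_step; [|apply (K _ eq_refl)]. unfold step; cbn [pc Nm Rm next]. rewrite H. reflexivity. Qed.
Lemma w_RSub d a b : nth_error p pc0 = Some (RSub d a b) ->
  (forall v, v = Rr a - Rr b -> wp p (mkState (S pc0) N (updR Rr d v)) B Q) -> wp p (mkState pc0 N Rr) (S B) Q.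
Proof. intros H K. eapply wp_step; [|apply (K _ eq_refl)]. unfold step; cbn [pc Nm Rm next]. rewrite H. reflexivity. Qed.
Lemma w_RMul d a b : nth_error p pc0 = Some (RMul d a b) ->
  (forall v, v = Rr a * Rr b -> wp p (mkState (S pc0) N (updR Rr d v)) B Q) -> wp p (mkState pc0 N Rr) (S B) Q.
Proof. intros H K. eapply wp_step; [|apply (K _ eq_refl)]. unfold step; cbn [pc Nm Rm next]. rewrite H. reflexivity. Qed.
Lemma w_RDiv d a b : nth_error p pc0 = Some (RDiv d a b) ->
  (forall v, v = (if Req_EM_T (Rr b) 0 then 0 else Rr a / Rr b) -> wp p (mkState (S pc0) N (updR Rr d v)) B Q) -> wp p (mkState pc0 N Rr) (S B) Q.
Proof. intros H K. eapply wp_step; [|apply (K _ eq_refl)]. unfold step; cbn [pc Nm Rm next]. rewrite H. reflexivity. Qed.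
Lemma w_RExp d a : nth_error p pc0 = Some (RExp d a) ->
  (forall v, v = exp (Rr a) -> wp p (mkState (S pc0) N (updR Rr d v)) B Q) -> wp p (mkState pc0 N Rr) (S B) Q.
Proof. intros H K. eapply wp_step; [|apply (K _ eq_refl)]. unfold step; cbn [pc Nm Rm next]. rewrite H. reflexivity. Qed.
Lemma w_RofN d i : nth_error p pc0 = Some (RofN d i) ->
  (forall v, v = INR (N i) -> wp p (mkState (S pc0) N (updR Rr d v)) B Q) -> wp p (mkState pc0 N Rr) (S B) Q.
Proof. intros H K. eapply wp_step; [|apply (K _ eq_refl)]. unfold step; cbn [pc Nm Rm next]. rewrite H. reflexivity. Qed.
Lemma w_RLoadI d i : nth_error p pc0 = Some (RLoadI d i) ->
  (forall v, v = Rr (N i) -> wp p (mkState (S pc0) N (updR Rr d v)) B Q) -> wp p (mkState pc0 N Rr) (S B) Q.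
Proof. intros H K. eapply wp_step; [|apply (K _ eq_refl)]. unfold step; cbn [pc Nm Rm next]. rewrite H. reflexivity. Qed.
Lemma w_RStoreI i a : nth_error p pc0 = Some (RStoreI i a) ->
  (forall w v, w = N i -> v = Rr a -> wp p (mkState (S pc0) N (updR Rr w v)) B Q) -> wp p (mkState pc0 N Rr) (S B) Q.
Proof. intros H K. eapply wp_step; [|apply (K _ _ eq_refl eq_refl)]. unfold step; cbn [pc Nm Rm next]. rewrite H. reflexivity. Qed.
Lemma w_NConst d k : nth_error p pc0 = Some (NConst d k) ->
  wp p (mkState (S pc0) (updN N d k) Rr) B Q -> wp p (mkState pc0 N Rr) (S B) Q.
Proof. intros H K. eapply wp_step; [|apply K]. unfold step; cbn [pc Nm Rm next]. rewrite H. reflexivity. Qed.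
Lemma w_NAdd d a b : nth_error p pc0 = Some (NAdd d a b) ->
  (forall w, w = (N a + N b)%nat -> wp p (mkState (S pc0) (updN N d w) Rr) B Q) -> wp p (mkState pc0 N Rr) (S B) Q.
Proof. intros H K. eapply wp_step; [|apply (K _ eq_refl)]. unfold step; cbn [pc Nm Rm next]. rewrite H. reflexivity. Qed.
Lemma w_NSub d a b : nth_error p pc0 = Some (NSub d a b) ->
  (forall w, w = (N a - N b)%nat -> wp p (mkState (S pc0) (updN N d w) Rr) B Q) -> wp p (mkState pc0 N Rr) (S B) Q.
Proof. intros H K. eapply wp_step; [|apply (K _ eq_refl)]. unfold step; cbn [pc Nm Rm next]. rewrite H. reflexivity. Qed.
Lemma w_NMul d a b : nth_error p pc0 = Some (NMul d a b) ->
  (forall w, w = (N a * N b)%nat -> wp p (mkState (S pc0) (updN N d w) Rr) B Q) -> wp p (mkState pc0 N Rr) (S B) Q.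
Proof. intros H K. eapply wp_step; [|apply (K _ eq_refl)]. unfold step; cbn [pc Nm Rm next]. rewrite H. reflexivity. Qed.
Lemma w_Jmp l : nth_error p pc0 = Some (Jmp l) ->
  wp p (mkState l N Rr) B Q -> wp p (mkState pc0 N Rr) (S B) Q.
Proof. intros H K. eapply wp_step; [|apply K]. unfold step; cbn [pc Nm Rm next]. rewrite H. reflexivity. Qed.
Lemma w_JNZ_z i l : nth_error p pc0 = Some (JNZ i l) -> N i = 0%nat ->
  wp p (mkState l N Rr) B Q -> wp p (mkState pc0 N Rr) (S B) Q.
Proof. intros H Z K. eapply wp_step; [|apply K]. unfold step; cbn [pc Nm Rm next]. rewrite H, Z. reflexivity. Qed.
Lemma w_JNZ_nz i l : nth_error p pc0 = Some (JNZ i l) -> N i <> 0%nat ->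
  wp p (mkState (S pc0) N Rr) B Q -> wp p (mkState pc0 N Rr) (S B) Q.
Proof. intros H Z K. eapply wp_step; [|apply K]. unfold step; cbn [pc Nm Rm next]. rewrite H.
  destruct (Nat.eqb_spec (N i) 0); [contradiction|reflexivity]. Qed.


Lemma w_COND d a b c e : nth_error p pc0 = Some (RCopy d e) ->
  nth_error p (S pc0) = Some (JRLt a b (S (S (S pc0)))) ->
  nth_error p (S (S pc0)) = Some (Jmp (S (S (S (S pc0))))) ->
  nth_error p (S (S (S pc0))) = Some (RCopy d c) ->
  d <> a -> d <> b -> d <> c ->
  (forall v, v = cond (Rr a) (Rr b) (Rr c) (Rr e) -> wp p (mkState (S (S (S (S pc0)))) N (updR Rr d v)) B Q) ->
  wp p (mkState pc0 N Rr) (S (S (S B))) Q.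
Proof.
  intros H0 H1 H2 H3 Da Db Dc K. specialize (K _ eq_refl).
  eapply wp_step. { unfold step; cbn [pc Nm Rm next]. rewrite H0. reflexivity. }
  assert (Ea : updR Rr d (Rr e) a = Rr a) by (unfold updR; destruct (Nat.eqb_spec a d); [lia|auto]).
  assert (Eb : updR Rr d (Rr e) b = Rr b) by (unfold updR; destruct (Nat.eqb_spec b d); [lia|auto]).
  assert (Ec : updR Rr d (Rr e) c = Rr c) by (unfold updR; destruct (Nat.eqb_spec c d); [lia|auto]).
  unfold cond in K. destruct (Rlt_dec (Rr a) (Rr b)) as [Hlt|Hlt].
  - eapply wp_step. { unfold step; cbn [pc Nm Rm next]. rewrite H1. rewrite Ea, Eb. destruct (Rlt_dec (Rr a) (Rr b)); [reflexivity|contradiction]. }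
    eapply wp_step. { unfold step; cbn [pc Nm Rm next]. rewrite H3. reflexivity. }
    apply (wp_mono _ _ B); [lia|].
    replace (updR (updR Rr d (Rr e)) d (updR Rr d (Rr e) c)) with (updR Rr d (Rr c)); auto.
    rewrite Ec. apply functional_extensionality. intros j. unfold updR. destruct (Nat.eqb j d); auto.
  - eapply wp_step. { unfold step; cbn [pc Nm Rm next]. rewrite H1. rewrite Ea, Eb. destruct (Rlt_dec (Rr a) (Rr b)); [contradiction|reflexivity]. }
    eapply wp_step. { unfold step; cbn [pc Nm Rm next]. rewrite H2. reflexivity. }
    apply (wp_mono _ _ B); [lia|]. auto.
Qed.
End Rules.

Lemma updR_same f k v j : j = k -> updR f k v j = v.
Proof. intros ->. unfold updR. rewrite Nat.eqb_refl. auto. Qed.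
Lemma updR_other f k v j : j <> k -> updR f k v j = f j.
Proof. intros H. unfold updR. destruct (Nat.eqb_spec j k); [contradiction|auto]. Qed.
Lemma updN_same f k v j : j = k -> updN f k v j = v.
Proof. intros ->. unfold updN. rewrite Nat.eqb_refl. auto. Qed.
Lemma updN_other f k v j : j <> k -> updN f k v j = f j.
Proof. intros H. unfold updN. destruct (Nat.eqb_spec j k); [contradiction|auto]. Qed.

Ltac neqtac := first [discriminate | lia].
Ltac eqtac := first [reflexivity | lia].
Ltac rd_step :=
  match goal with
  | |- context[updR ?f ?k ?v ?j] =>
      first [ rewrite (updR_other f k v j) by discriminate | rewrite (updR_same f k v j) by reflexivity
            | rewrite (updR_other f k v j) by lia | rewrite (updR_same f k v j) by lia ]
  | |- context[updN ?f ?k ?v ?j] =>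
      first [ rewrite (updN_other f k v j) by discriminate | rewrite (updN_same f k v j) by reflexivity
            | rewrite (updN_other f k v j) by lia | rewrite (updN_same f k v j) by lia ]
  end.
Ltac rd_step_in H :=
  match type of H with
  | context[updR ?f ?k ?v ?j] =>
      first [ rewrite (updR_other f k v j) in H by discriminate | rewrite (updR_same f k v j) in H by reflexivity
            | rewrite (updR_other f k v j) in H by lia | rewrite (updR_same f k v j) in H by lia ]
  | context[updN ?f ?k ?v ?j] =>
      first [ rewrite (updN_other f k v j) in H by discriminate | rewrite (updN_same f k v j) in H by reflexivity
            | rewrite (updN_other f k v j) in H by lia | rewrite (updN_same f k v j) in H by lia ]
  end.
Ltac rd := repeat rd_step.
Ltac rdin_slow H := repeat (rd_step_in H).
Ltac rdin H := first [ (cbn [updR updN Nat.eqb] in H;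
                        lazymatch type of H with context[Nat.eqb] => fail | _ => idtac end;
                        lazymatch type of H with context[updR _ _ _ _] => fail | _ => idtac end;
                        lazymatch type of H with context[updN _ _ _ _] => fail | _ => idtac end)
                     | rdin_slow H ].

Ltac intro_v := let v := fresh "v" in let Hv := fresh "Hv" in intros v Hv; rdin Hv.
Ltac intro_w := let w := fresh "w" in let Hw := fresh "Hw" in intros w Hw; rdin Hw.
Ltac st :=
  match goal with
  | |- wp ?p (mkState ?pc _ _) _ _ =>
    let ins := eval cbv in (nth_error p pc) in
    lazymatch ins with
    | Some (RCopy _ _) =>
        first [ eapply w_COND; [reflexivity|reflexivity|reflexivity|reflexivity|discriminate|discriminate|discriminate|]; intro_v
              | eapply w_RCopy; [reflexivity|]; intro_v ]
    | Some (RAdd _ _ _) => eapply w_RAdd; [reflexivity|]; intro_v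
    | Some (RSub _ _ _) => eapply w_RSub; [reflexivity|]; intro_v
    | Some (RMul _ _ _) => eapply w_RMul; [reflexivity|]; intro_v
    | Some (RDiv _ _ _) => eapply w_RDiv; [reflexivity|]; intro_v
    | Some (RExp _ _) => eapply w_RExp; [reflexivity|]; intro_v
    | Some (RofN _ _) => eapply w_RofN; [reflexivity|]; intro_v
    | Some (RLoadI _ _) => eapply w_RLoadI; [reflexivity|]; intro_v
    | Some (RStoreI _ _) => eapply w_RStoreI; [reflexivity|];
        let w := fresh "w" in let v := fresh "v" in
        let Hw := fresh "Hw" in let Hv := fresh "Hv" in intros w v Hw Hv; rdin Hw; rdin Hv
    | Some (NConst _ _) => eapply w_NConst; [reflexivity|]
    | Some (NAdd _ _ _) => eapply w_NAdd; [reflexivity|]; intro_w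
    | Some (NSub _ _ _) => eapply w_NSub; [reflexivity|]; intro_w
    | Some (NMul _ _ _) => eapply w_NMul; [reflexivity|]; intro_w
    | Some (Jmp _) => eapply w_Jmp; [reflexivity|]
    end
  end.

Lemma updN_id (N : nat -> nat) k v : N k = v -> N = updN N k v.
Proof. intros H. apply functional_extensionality. intros j. unfold updN. destruct (Nat.eqb_spec j k); subst; auto. Qed.
Lemma updR_id (R0 : nat -> R) k v : R0 k = v -> R0 = updR R0 k v.
Proof. intros H. apply functional_extensionality. intros j. unfold updR. destruct (Nat.eqb_spec j k); subst; auto. Qed.

Ltac fixN H := rewrite (updN_id _ _ _ H).
Ltac fixR H := rewrite (updR_id _ _ _ H).
Ltac jnz_nz := eapply w_JNZ_nz; [reflexivity | rd; lia | ].
Ltac jnz_z := eapply w_JNZ_z; [reflexivity | rd; lia | ].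

Definition I1 n L U beta (x : nat -> R) (q : nat) (s : state) : Prop :=
  pc s = 12%nat /\ Nm s 0 = n /\ Nm s 1 = 1%nat /\ Nm s 2 = 10%nat /\ Nm s 9 = 0%nat /\ Nm s 6 = (n - q)%nat /\
  Rm s (10 * n + 1007)%nat = L /\ Rm s (10 * n + 1008)%nat = U /\ Rm s (10 * n + 1009)%nat = beta /\
  (forall i, (i < n - q)%nat -> Rm s (3 + i)%nat = x i) /\
  (forall i, (n - q <= i < n)%nat -> Rm s (1000 + 10 * i)%nat = x i).

Lemma seg0 n L U beta x N R0 : N 0%nat = n -> N 9%nat = 0%nat -> R0 0%nat = L -> R0 1%nat = U -> R0 2%nat = beta ->
  (forall i, (i < n)%nat -> R0 (3 + i)%nat = x i) ->
  wp prog (mkState 0 N R0) 20 (I1 n L U beta x 0).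
Proof.
  intros HN0 HN9 HR0 HR1 HR2 HX. fixN HN9. fixN HN0. fixR HR0. fixR HR1. fixR HR2.
  repeat st. apply wp_done. unfold I1; cbn [pc Nm Rm].
  subst. repeat split; intros; rd; auto; try lia. apply HX; lia.
Qed.

Lemma seg1 n L U beta x q s : (q < n)%nat -> I1 n L U beta x q s -> wp prog s 12 (I1 n L U beta x (S q)).
Proof.
  intros Hq. destruct s as [pc0 N R0]. intros [Hpc [HN0 [HN1 [HN2 [HN9 [HN6 [HL [HU [HB [HX1 HX2]]]]]]]]]].
  cbn [pc Nm Rm] in *. subst pc0.
  fixN HN0. fixN HN1. fixN HN2. fixN HN9. fixN HN6.
  jnz_nz. repeat st. apply wp_done. unfold I1; cbn [pc Nm Rm].
  repeat split; intros; rd; auto; try lia.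
  all: try (apply HX1; lia).
  destruct (Nat.eq_dec i (n - q - 1)); rd.
  - rewrite Hv0, Hv. replace w with (3 + i)%nat by lia. apply HX1. lia.
  - apply HX2. lia.
Qed.

Definition xmem n (x : nat -> R) (R0 : nat -> R) := forall m, (m < n)%nat -> R0 (1000 + 10 * m)%nat = x m.
Definition gmem (x : nat -> R) (i : nat) (R0 : nat -> R) := forall k, (k <= i)%nat ->
  R0 (1001 + 10 * k)%nat = bestf x i k /\ R0 (1002 + 10 * k)%nat = bestf (negx x) i k.

Definition I2 n L U beta (x : nat -> R) (i : nat) (s : state) : Prop :=
  pc s = 36%nat /\ Nm s 0 = n /\ Nm s 1 = 1%nat /\ Nm s 2 = 10%nat /\ Nm s 9 = 0%nat /\ Nm s 6 = i /\
  Rm s 3 = L /\ Rm s 4 = U /\ Rm s 5 = beta /\ Rm s 6 = 0 /\ xmem n x (Rm s) /\ gmem x i (Rm s).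

Ltac memeq H := match goal with |- ?R0 ?a = _ => match type of H with ?R0 ?b = _ =>
  replace a with b by lia; exact H end end.

Lemma seg1x n L U beta x s : I1 n L U beta x n s -> wp prog s 20 (I2 n L U beta x 0).
Proof.
  destruct s as [pc0 N R0]. intros [Hpc [HN0 [HN1 [HN2 [HN9 [HN6 [HL [HU [HB [HX1 HX2]]]]]]]]]].
  cbn [pc Nm Rm] in *. subst pc0.
  fixN HN0. fixN HN1. fixN HN2. fixN HN9. fixN HN6.
  jnz_z. do 14 st. apply wp_done. unfold I2, xmem, gmem; cbn [pc Nm Rm].
  repeat split; intros; rd; auto; try lia.
  - rewrite Hv. memeq HL.
  - rewrite Hv0. memeq HU.
  - rewrite Hv1. memeq HB.
  - apply HX2. lia.
  - replace k with 0%nat by lia. rd. rewrite Hv3, Hv2. reflexivity.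
  - replace k with 0%nat by lia. rd. rewrite Hv4, Hv2. reflexivity.
Qed.

Lemma bestf_mid v i k : k <> 0%nat -> k <> S i -> bestf v (S i) k = mx (bestf v i k) (bestf v i (k - 1) + v i).
Proof. intros. cbn [bestf]. destruct (Nat.eqb_spec k 0); [lia|]. destruct (Nat.eqb_spec k (S i)); [lia|]. auto. Qed.
Lemma bestf_top v i : bestf v (S i) (S i) = bestf v i i + v i.
Proof. cbn [bestf Nat.eqb]. rewrite Nat.eqb_refl. auto. Qed.
Lemma bestf_zero v i : bestf v (S i) 0 = bestf v i 0.
Proof. reflexivity. Qed.

Ltac ltbs := repeat match goal with |- context[Nat.ltb ?a ?b] => destruct (Nat.ltb_spec a b); try lia end.

Definition I3 n L U beta (x : nat -> R) (i q : nat) (s : state) : Prop :=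
  pc s = 54%nat /\ Nm s 0 = n /\ Nm s 1 = 1%nat /\ Nm s 2 = 10%nat /\ Nm s 9 = 0%nat /\ Nm s 6 = i /\
  Nm s 7 = (i - q)%nat /\
  Rm s 3 = L /\ Rm s 4 = U /\ Rm s 5 = beta /\ Rm s 6 = 0 /\ Rm s 7 = x i /\ Rm s 8 = negx x i /\
  xmem n x (Rm s) /\
  (forall k, (k <= i + 1)%nat ->
     Rm s (1001 + 10 * k)%nat = (if Nat.ltb (i - q) k then bestf x (S i) k else bestf x i k) /\
     Rm s (1002 + 10 * k)%nat = (if Nat.ltb (i - q) k then bestf (negx x) (S i) k else bestf (negx x) i k)).

Lemma seg3 n L U beta x i q s : (q < i)%nat -> (i < n)%nat -> I3 n L U beta x i q s -> wp prog s 25 (I3 n L U beta x i (S q)).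
Proof.
  intros Hq Hi. destruct s as [pc0 N R0].
  intros (Hpc & HN0 & HN1 & HN2 & HN9 & HN6 & HN7 & HR3 & HR4 & HR5 & HR6 & HR7 & HR8 & HX & HG).
  cbn [pc Nm Rm] in *. subst pc0.
  fixN HN0. fixN HN1. fixN HN2. fixN HN9. fixN HN6. fixN HN7.
  fixR HR3. fixR HR4. fixR HR5. fixR HR6. fixR HR7. fixR HR8.
  jnz_nz. repeat st. apply wp_done. unfold I3, xmem; cbn [pc Nm Rm].
  repeat split; intros; rd; auto; try lia.
  - destruct (Nat.eq_dec k (i - q)) as [Ek|Ek].
    + subst k. rd. rewrite Hv3, Hv2, Hv1, Hv0, Hv.
      destruct (HG (i - q)%nat ltac:(lia)) as [G1 _]. destruct (HG (i - q - 1)%nat ltac:(lia)) as [G2 _].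
      replace w0 with (1001 + 10 * (i - q))%nat by lia. replace w1 with (1001 + 10 * (i - q - 1))%nat by lia.
      rewrite G1, G2. ltbs. rewrite bestf_mid by lia. reflexivity.
    + rd. destruct (HG k H) as [G1 _]. rewrite G1. ltbs; auto.
  - destruct (Nat.eq_dec k (i - q)) as [Ek|Ek].
    + subst k. rd. rewrite Hv8, Hv7, Hv6, Hv5, Hv4.
      destruct (HG (i - q)%nat ltac:(lia)) as [_ G1]. destruct (HG (i - q - 1)%nat ltac:(lia)) as [_ G2].
      replace w3 with (1002 + 10 * (i - q))%nat by lia. replace w4 with (1002 + 10 * (i - q - 1))%nat by lia.
      rewrite G1, G2. ltbs. rewrite bestf_mid by lia. reflexivity.
    + rd. destruct (HG k H) as [_ G1]. rewrite G1. ltbs; auto.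
Qed.

Lemma seg3x n L U beta x i s : I3 n L U beta x i i s -> wp prog s 5 (I2 n L U beta x (S i)).
Proof.
  destruct s as [pc0 N R0].
  intros (Hpc & HN0 & HN1 & HN2 & HN9 & HN6 & HN7 & HR3 & HR4 & HR5 & HR6 & HR7 & HR8 & HX & HG).
  cbn [pc Nm Rm] in *. subst pc0.
  fixN HN0. fixN HN1. fixN HN2. fixN HN9. fixN HN6. fixN HN7.
  jnz_z. do 2 st. apply wp_done. unfold I2, gmem; cbn [pc Nm Rm].
  repeat split; intros; rd; try (first [reflexivity | assumption | lia]).
  - destruct (HG k ltac:(lia)) as [G1 _]. rewrite G1. ltbs; auto. replace k with 0%nat by lia. reflexivity.
  - destruct (HG k ltac:(lia)) as [_ G1]. rewrite G1. ltbs; auto. replace k with 0%nat by lia. reflexivity.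
Qed.

Lemma seg2 n L U beta x i s : (i < n)%nat -> I2 n L U beta x i s -> wp prog s (25 * n + 25) (I2 n L U beta x (S i)).
Proof.
  intros Hi. destruct s as [pc0 N R0].
  intros (Hpc & HN0 & HN1 & HN2 & HN9 & HN6 & HR3 & HR4 & HR5 & HR6 & HX & HG).
  cbn [pc Nm Rm] in *. subst pc0.
  fixN HN0. fixN HN1. fixN HN2. fixN HN9. fixN HN6.
  fixR HR3. fixR HR4. fixR HR5. fixR HR6.
  apply (wp_mono _ _ (18 + (i * 25 + 5))); [lia|].
  st. jnz_nz. do 16 st.
  apply wp_loop with (I := I3 n L U beta x i).
  - intros q s Hq Hs. apply seg3; auto.
  - intros s Hs. apply seg3x; auto.
  - unfold I3, xmem; cbn [pc Nm Rm].
    repeat split; intros; rd; try (first [reflexivity | assumption | lia]).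
    + rewrite Hv. replace w1 with (1000 + 10 * i)%nat by lia. apply HX; auto.
    + rewrite Hv0, Hv. replace w1 with (1000 + 10 * i)%nat by lia. rewrite (HX i Hi). reflexivity.
    + apply HX; lia.
    + destruct (Nat.eq_dec k (S i)) as [Ek|Ek].
      * subst k. rd. rewrite Hv3, Hv2, Hv1, Hv. replace w2 with (1001 + 10 * i)%nat by lia.
        replace w1 with (1000 + 10 * i)%nat by lia. rewrite (HX i Hi).
        destruct (HG i ltac:(lia)) as [G1 _]. rewrite G1. ltbs. rewrite bestf_top. reflexivity.
      * rd. destruct (HG k ltac:(lia)) as [G1 _]. rewrite G1. ltbs. auto.
    + destruct (Nat.eq_dec k (S i)) as [Ek|Ek].
      * subst k. rd. rewrite Hv6, Hv5, Hv4, Hv0, Hv. replace w5 with (1002 + 10 * i)%nat by lia.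
        replace w1 with (1000 + 10 * i)%nat by lia. rewrite (HX i Hi).
        destruct (HG i ltac:(lia)) as [_ G1]. rewrite G1. ltbs. rewrite bestf_top. reflexivity.
      * rd. destruct (HG k ltac:(lia)) as [_ G1]. rewrite G1. ltbs. auto.
Qed.

Ltac cl := try (first [reflexivity | assumption | lia]).
Ltac run_to t := repeat (match goal with |- wp _ (mkState ?p _ _) _ _ =>
  tryif (constr_eq p t) then fail else st end).

Definition I4 n L U beta (x : nat -> R) (j : nat) (s : state) : Prop :=
  pc s = 89%nat /\ Nm s 0 = n /\ Nm s 1 = 1%nat /\ Nm s 2 = 10%nat /\ Nm s 9 = 0%nat /\ Nm s 6 = j /\
  Rm s 3 = L /\ Rm s 4 = U /\ Rm s 5 = beta /\ Rm s 6 = 0 /\ xmem n x (Rm s) /\ gmem x n (Rm s) /\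
  Rm s 13 = bestf x n n /\ Rm s 14 = INR (n - 1) /\ Rm s 15 = accJ n L U beta x j.

Definition I5 n L U beta (x : nat -> R) (j k : nat) (s : state) : Prop :=
  pc s = 96%nat /\ Nm s 0 = n /\ Nm s 1 = 1%nat /\ Nm s 2 = 10%nat /\ Nm s 9 = 0%nat /\ Nm s 6 = j /\
  Nm s 7 = k /\
  Rm s 3 = L /\ Rm s 4 = U /\ Rm s 5 = beta /\ Rm s 6 = 0 /\ xmem n x (Rm s) /\ gmem x n (Rm s) /\
  Rm s 13 = bestf x n n /\ Rm s 14 = INR (n - 1) /\ Rm s 16 = x j /\
  Rm s 15 = accK n L U beta x (accJ n L U beta x j) j k.

Definition Qf n L U beta x (s : state) : Prop :=
  step prog s = None /\ Rm s 0 = cn n * accJ n L U beta x n.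

Lemma seg2x n L U beta x s : I2 n L U beta x n s -> wp prog s 12 (I4 n L U beta x 0).
Proof.
  destruct s as [pc0 N R0].
  intros (Hpc & HN0 & HN1 & HN2 & HN9 & HN6 & HR3 & HR4 & HR5 & HR6 & HX & HG).
  cbn [pc Nm Rm] in *. subst pc0.
  fixN HN0. fixN HN1. fixN HN2. fixN HN9. fixN HN6.
  fixR HR3. fixR HR4. fixR HR5. fixR HR6.
  st. jnz_z. run_to 89%nat. apply wp_done. unfold I4, xmem, gmem; cbn [pc Nm Rm].
  repeat split; intros; rd; cl.
  - apply HX; lia.
  - apply (proj1 (HG k ltac:(lia))).
  - apply (proj2 (HG k ltac:(lia))).
  - rewrite Hv. replace w1 with (1001 + 10 * n)%nat by lia. apply (proj1 (HG n ltac:(lia))).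
  - rewrite Hv0. rewrite Hw2. reflexivity.
Qed.

Lemma seg4x n L U beta x s : I4 n L U beta x n s -> wp prog s 12 (Qf n L U beta x).
Proof.
  destruct s as [pc0 N R0].
  intros (Hpc & HN0 & HN1 & HN2 & HN9 & HN6 & HR3 & HR4 & HR5 & HR6 & HX & HG & HR13 & HR14 & HR15).
  cbn [pc Nm Rm] in *. subst pc0.
  fixN HN0. fixN HN1. fixN HN2. fixN HN9. fixN HN6. fixR HR15.
  st. jnz_z. run_to 238%nat. apply wp_done. unfold Qf. split; [reflexivity|]. cbn [Rm]. rd.
  rewrite Hv2, Hv1, Hv0, Hv. subst w0 w1. reflexivity.
Qed.

Lemma seg5x n L U beta x j s : (j < n)%nat -> I5 n L U beta x j n s -> wp prog s 5 (I4 n L U beta x (S j)).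
Proof.
  intros Hj. destruct s as [pc0 N R0].
  intros (Hpc & HN0 & HN1 & HN2 & HN9 & HN6 & HN7 & HR3 & HR4 & HR5 & HR6 & HX & HG & HR13 & HR14 & HR16 & HR15).
  cbn [pc Nm Rm] in *. subst pc0.
  fixN HN0. fixN HN1. fixN HN2. fixN HN9. fixN HN6. fixN HN7.
  st. jnz_z. run_to 89%nat. apply wp_done. unfold I4, xmem, gmem; cbn [pc Nm Rm].
  repeat split; intros; rd; cl.
  - apply HX; lia.
  - apply (proj1 (HG k ltac:(lia))).
  - apply (proj2 (HG k ltac:(lia))).
Qed.

Lemma seg5 n L U beta x j k s : (j < n)%nat -> (k < n)%nat -> I5 n L U beta x j k s -> wp prog s 130 (I5 n L U beta x j (S k)).
Proof.
  intros Hj Hk. destruct s as [pc0 N R0].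
  intros (Hpc & HN0 & HN1 & HN2 & HN9 & HN6 & HN7 & HR3 & HR4 & HR5 & HR6 & HX & HG & HR13 & HR14 & HR16 & HR15).
  cbn [pc Nm Rm] in *. subst pc0.
  fixN HN0. fixN HN1. fixN HN2. fixN HN9. fixN HN6. fixN HN7.
  fixR HR3. fixR HR4. fixR HR5. fixR HR6. fixR HR13. fixR HR14. fixR HR15. fixR HR16.
  st. jnz_nz. run_to 96%nat.
  apply wp_done. unfold I5, xmem, gmem; cbn [pc Nm Rm].
  (repeat split; intros; rd; cl).
  - apply HX; lia.
  - apply (proj1 (HG k0 ltac:(lia))).
  - apply (proj2 (HG k0 ltac:(lia))).
  - replace w1 with (1001 + 10 * k)%nat in Hv by lia. rewrite (proj1 (HG k ltac:(lia))) in Hv.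
    replace w2 with (1001 + 10 * (k + 1))%nat in Hv0 by lia. rewrite (proj1 (HG (k + 1)%nat ltac:(lia))) in Hv0.
    replace w3 with (1002 + 10 * k)%nat in Hv1 by lia. rewrite (proj2 (HG k ltac:(lia))) in Hv1.
    replace w4 with (1002 + 10 * (k + 1))%nat in Hv2 by lia. rewrite (proj2 (HG (k + 1)%nat ltac:(lia))) in Hv2.
    (repeat match goal with H : ?v = _ |- _ => is_var v; subst v end).
    reflexivity.
Qed.

Lemma seg4 n L U beta x j s : (j < n)%nat -> I4 n L U beta x j s -> wp prog s (130 * n + 12) (I4 n L U beta x (S j)).
Proof.
  intros Hj. destruct s as [pc0 N R0].
  intros (Hpc & HN0 & HN1 & HN2 & HN9 & HN6 & HR3 & HR4 & HR5 & HR6 & HX & HG & HR13 & HR14 & HR15).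
  cbn [pc Nm Rm] in *. subst pc0.
  fixN HN0. fixN HN1. fixN HN2. fixN HN9. fixN HN6.
  fixR HR3. fixR HR4. fixR HR5. fixR HR6. fixR HR13. fixR HR14. fixR HR15.
  apply (wp_mono _ _ (7 + (n * 130 + 5))); [lia|].
  st. jnz_nz. do 5 st.
  apply wp_loop with (I := I5 n L U beta x j).
  - intros q s Hq Hs. apply seg5; auto.
  - intros s Hs. apply seg5x; auto.
  - unfold I5, xmem, gmem; cbn [pc Nm Rm].
    repeat split; intros; rd; cl.
    + apply HX; lia.
    + apply (proj1 (HG k ltac:(lia))).
    + apply (proj2 (HG k ltac:(lia))).
    + rewrite Hv. replace w1 with (1000 + 10 * j)%nat by lia. apply HX; lia.
Qed.

Lemma wp_then p s B1 B2 Q1 Q : wp p s B1 Q1 -> (forall s', Q1 s' -> wp p s' B2 Q) -> wp p s (B1 + B2) Q.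
Proof. intros H K. apply wp_seq. eapply wp_conseq; [|apply H]. auto. Qed.

Lemma whole n L U beta x : (1 <= n)%nat -> inbox n L U x ->
  wp prog (init n L U beta x) (20 + ((n * 12 + 20) + ((n * (25 * n + 25) + 12) + (n * (130 * n + 12) + 12))))
     (Qf n L U beta x).
Proof.
  intros Hn Hx.
  apply wp_then with (Q1 := I1 n L U beta x 0).
  { unfold init. apply (seg0 n L U beta x); try reflexivity.
    intros i Hi. change (3 + i)%nat with (S (S (S i))). cbv beta iota.
    destruct (Nat.ltb_spec i n); [reflexivity|lia]. }
  intros s1 Hs1. apply wp_then with (Q1 := I2 n L U beta x 0).
  { apply (wp_loop _ (I1 n L U beta x) n 12 20); auto.
    - intros q s Hq Hs. apply seg1; auto.
    - intros s Hs. apply seg1x; auto. }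
  intros s2 Hs2. apply wp_then with (Q1 := I4 n L U beta x 0).
  { apply (wp_loop _ (I2 n L U beta x) n (25 * n + 25) 12); auto.
    - intros q s Hq Hs. apply seg2; auto.
    - intros s Hs. apply seg2x; auto. }
  intros s3 Hs3. apply (wp_loop _ (I4 n L U beta x) n (130 * n + 12) 12); auto.
  - intros q s Hq Hs. apply seg4; auto.
  - intros s Hs. apply seg4x; auto.
Qed.


Theorem mainTheorem5 :
  exists (p : list instr) (c : nat),
    forall (n : nat) (L U beta : R) (x : nat -> R),
      (1 <= n)%nat -> L < U -> 0 < beta -> inbox n L U x ->
      exists t : nat,
        (t <= c * n * n + c)%nat /\
        halted p (run p t (init n L U beta x)) /\
        is_lub (SSset n L U beta x) (Rm (run p t (init n L U beta x)) 0%nat).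
Proof.
  exists prog, 1000%nat. intros n L U beta x Hn HLU Hb Hx.
  destruct (whole n L U beta x Hn Hx) as [t [Ht [Hh Hr]]].
  exists t. split; [nia|]. split; [exact Hh|]. rewrite Hr. apply main_math; auto.
Qed.
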